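(* Suppose $(A,B)$ is controllable. For each $M>0$ let $\hat x_M\in C([0,T],\mathbb R^n)$ be a path, and suppose the family $\{\hat x_M\}_{M>0}$ is uniformly bounded with respect to $M$ in the norm $\big(\int_0^T\|\cdot\|^2dt\big)^{1/2}$. Consider finitely many agents with fixed initial states $x_1^0,\dots,x_N^0$, each applying, for the given $M$, the optimal tracking control law of $\hat x_M$ (i.e. $u_i^*=-\frac1rB^T(\Gamma x_i+\beta_j)$ if $x_i^0\in D_j(\hat x_M)$, with $\Gamma,\beta_j,D_j$ computed with terminal weight $M$ and tracked path $\hat x_M$). Then for every $\epsilon>0$ there exists $M_0>0$ such that for all $M>M_0$, every agent's state at time $T$ lies in a ball of radius $\epsilon$ centered at one of the points $p_1,\dots,p_l$.
   Context: Agents have dynamics $\dot x_i=Ax_i+Bu_i$, $x_i(0)=x_i^0$, with $A\in\mathbb R^{n\times n}$, $B\in\mathbb R^{n\times m}$; constants $q,r,M>0$, horizon $T>0$, destinations $p_1,\dots,p_l\in\mathbb R^n$. For a tracked path $\hat x$ and a given $M$, $\Gamma,\beta_k,\delta_k$ are the unique solutions on $[0,T]$ of $\dot\Gamma-\frac1r\Gamma BB^T\Gamma+\Gamma A+A^T\Gamma+qI_n=0$, $\Gamma(T)=MI_n$; $\dot\beta_k=(\frac1r\Gamma BB^T-A^T)\beta_k+q\hat x$, $\beta_k(T)=-Mp_k$; $\dot\delta_k=\frac1{2r}\beta_k^TBB^T\beta_k-\frac q2\hat x^T\hat x$, $\delta_k(T)=\frac M2p_k^Tp_k$. Basins: $D_j(\hat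 x)=\{x:(\beta_j(0)-\beta_k(0))^Tx\le\delta_k(0)-\delta_j(0)\ \forall k\}$, with ties broken in favor of the smallest index $j$. This control law is the optimal control for the cost $\int_0^T\{\frac q2\|x_i-\hat x\|^2+\frac r2\|u_i\|^2\}dt+\frac M2\min_j\|x_i(T)-p_j\|^2$. *)

(* Defs.v *)
From Stdlib Require Import Reals.
Open Scope R_scope.

(* Vectors in R^k are represented as functions nat -> R (only indices < k
   matter); matrices as nat -> nat -> R (row, column). Dimensions are passed
   explicitly to every operation. *)
Definition vec := nat -> R.
Definition mat := nat -> nat -> R.

Fixpoint sumR (k : nat) (f : nat -> R) : R :=
  match k with O => 0 | S k' => sumR k' f + f k' end.

Definition dot (k : nat) (u v : vec) : R := sumR k (fun i => u i * v i).
Definition vnorm (k : nat) (u : vec) : R := sqrt (dot k u u).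
Definition mvec (k : nat) (A : mat) (v : vec) : vec :=
  fun i => sumR k (fun c => A i c * v c).
Definition mmul (k : nat) (A B : mat) : mat :=
  fun i j => sumR k (fun c => A i c * B c j).
Definition trm (A : mat) : mat := fun i j => A j i.
Definition idm : mat := fun i j => if Nat.eqb i j then 1 else 0.

Fixpoint mpow (n : nat) (A : mat) (k : nat) : mat :=
  match k with O => idm | S k' => mmul n A (mpow n A k') end.

(* Kalman controllability matrix [B, AB, ..., A^(n-1) B]  (n x nm):
   column a + m*k (a < m, k < n) is column a of A^k B. *)
Definition kalman (n m : nat) (A B : mat) : mat :=
  fun i c => mmul n (mpow n A (c / m)) B i (c mod m).

(* rank = n for an n x c matrix K: its n rows are linearly independent. *)
Definition full_row_rank (n c : nat) (K : mat) : Prop :=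
  forall v : vec,
    (forall j, (j < c)%nat -> sumR n (fun i => v i * K i j) = 0) ->
    forall i, (i < n)%nat -> v i = 0.

Definition controllable (n m : nat) (A B : mat) : Prop :=
  full_row_rank n (n * m) (kalman n m A B).

Definition cont_on (a b : R) (f : R -> R) : Prop :=
  forall t, a <= t <= b -> forall eps, 0 < eps ->
    exists d, 0 < d /\ forall s, a <= s <= b -> Rabs (s - t) < d ->
      Rabs (f s - f t) < eps.

Definition ode_sol (a b : R) (f g : R -> R) : Prop :=
  cont_on a b f /\ forall t, a < t < b -> derivable_pt_lim f t (g t).

Definition riccati_sol (n m : nat) (A B : mat) (q r T M : R)
    (G : R -> mat) : Prop :=
  forall i j, (i < n)%nat -> (j < n)%nat ->
    ode_sol 0 T (fun t => G t i j)
      (fun t => / r * mmul n (mmul m (mmul n (G t) B) (trm B)) (G t) i j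
                - mmul n (G t) A i j - mmul n (trm A) (G t) i j
                - q * idm i j)
    /\ G T i j = M * idm i j.

Definition beta_sol (n m : nat) (A B : mat) (q r T M : R) (G : R -> mat)
    (xhat : R -> vec) (pk : vec) (b : R -> vec) : Prop :=
  forall i, (i < n)%nat ->
    ode_sol 0 T (fun t => b t i)
      (fun t => / r * mvec n (mmul m (mmul n (G t) B) (trm B)) (b t) i
                - mvec n (trm A) (b t) i + q * xhat t i)
    /\ b T i = - M * pk i.

Definition delta_sol (n m : nat) (B : mat) (q r T M : R)
    (xhat : R -> vec) (pk : vec) (b : R -> vec) (d : R -> R) : Prop :=
  ode_sol 0 T d
    (fun t => / (2 * r) * dot m (mvec n (trm B) (b t)) (mvec n (trm B) (b t))
              - q / 2 * dot n (xhat t) (xhat t))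
  /\ d T = M / 2 * dot n pk pk.

Definition in_D (n l : nat) (b0 : nat -> vec) (d0 : nat -> R) (j : nat)
    (x : vec) : Prop :=
  forall k, (k < l)%nat ->
    dot n (fun c => b0 j c - b0 k c) x <= d0 k - d0 j.

(* x belongs to the basin D_j, ties broken in favour of the smallest index *)
Definition basin (n l : nat) (b0 : nat -> vec) (d0 : nat -> R) (j : nat)
    (x : vec) : Prop :=
  (j < l)%nat /\ in_D n l b0 d0 j x /\
  forall j', (j' < j)%nat -> ~ in_D n l b0 d0 j' x.

Definition agent_traj (n m : nat) (A B : mat) (r T : R) (G : R -> mat)
    (bj : R -> vec) (x0 : vec) (x : R -> vec) : Prop :=
  forall i, (i < n)%nat ->
    x 0 i = x0 i /\
    ode_sol 0 T (fun t => x t i)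
      (fun t => mvec n A (x t) i
                + mvec m B (fun a => - / r *
                     mvec n (trm B) (fun c => mvec n (G t) (x t) c + bj t c) a) i).

(* Main.v *)
Require Import Defs.
From Stdlib Require Import Reals.
Open Scope R_scope.
From Stdlib Require Import Lra Lia FunctionalExtensionality Factorial Classical IndefiniteDescription Wf_nat.

Lemma sumR_ext k f g : (forall i, (i < k)%nat -> f i = g i) -> sumR k f = sumR k g.
Proof. induction k; simpl; intros H; auto. rewrite IHk by (intros; apply H; lia). rewrite H by lia. auto. Qed.

Lemma sumR_plus k f g : sumR k (fun i => f i + g i) = sumR k f + sumR k g.
Proof. induction k; simpl; [lra| rewrite IHk; lra]. Qed.

Lemma sumR_minus k f g : sumR k (fun i => f i - g i) = sumR k f - sumR k g.
Proof. induction k; simpl; [lra| rewrite IHk; lra]. Qed.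

Lemma sumR_scal k c f : sumR k (fun i => c * f i) = c * sumR k f.
Proof. induction k; simpl; [lra| rewrite IHk; lra]. Qed.

Lemma sumR_scalr k c f : sumR k (fun i => f i * c) = sumR k f * c.
Proof. induction k; simpl; [lra| rewrite IHk; lra]. Qed.

Lemma sumR_zero k f : (forall i, (i < k)%nat -> f i = 0) -> sumR k f = 0.
Proof. intros H. rewrite (sumR_ext k f (fun _ => 0)) by auto. induction k; simpl; auto. rewrite IHk; [lra|]. intros; apply H; lia. Qed.

Lemma sumR_swap a b f : sumR a (fun i => sumR b (fun j => f i j)) = sumR b (fun j => sumR a (fun i => f i j)).
Proof. induction a; simpl. symmetry; apply sumR_zero; auto. rewrite IHa, <- sumR_plus. auto. Qed.

Lemma sumR_le k f g : (forall i, (i < k)%nat -> f i <= g i) -> sumR k f <= sumR k g.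
Proof. induction k; simpl; intros; [lra|]. assert (f k <= g k) by (apply H; lia). assert (sumR k f <= sumR k g) by (apply IHk; intros; apply H; lia). lra. Qed.

Lemma sumR_nonneg k f : (forall i, (i < k)%nat -> 0 <= f i) -> 0 <= sumR k f.
Proof. intros H. replace 0 with (sumR k (fun _ => 0)). apply sumR_le; auto. apply sumR_zero; auto. Qed.

Lemma sumR_abs k f : Rabs (sumR k f) <= sumR k (fun i => Rabs (f i)).
Proof. induction k; simpl. rewrite Rabs_R0; lra. eapply Rle_trans. apply Rabs_triang. lra. Qed.

Lemma sumR_const k c : sumR k (fun _ => c) = INR k * c.
Proof. induction k; simpl sumR. simpl; lra. rewrite IHk, S_INR; lra. Qed.

Lemma sumR_add a b f : sumR (a + b) f = sumR a f + sumR b (fun i => f (a + i)%nat).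
Proof. induction b; simpl. rewrite Nat.add_0_r; lra. rewrite Nat.add_succ_r. simpl. rewrite IHb. lra. Qed.

Lemma sumR_single k j f : (j < k)%nat -> (forall i, (i < k)%nat -> i <> j -> f i = 0) -> sumR k f = f j.
Proof. induction k; intros Hj H; [lia|]. simpl. destruct (Nat.eq_dec j k).
 subst. rewrite sumR_zero; [lra|]. intros; apply H; lia.
 rewrite IHk by (try lia; intros; apply H; lia). rewrite (H k) by lia. lra. Qed.

Lemma sumR_rev k f : sumR k f = sumR k (fun i => f (k - 1 - i)%nat).
Proof. induction k; auto. replace (sumR (S k) (fun i => f (S k - 1 - i)%nat)) with
 (sumR (1 + k) (fun i => f (S k - 1 - i)%nat)) by auto.
 rewrite sumR_add. simpl sumR at 1. simpl sumR at 2. rewrite IHk.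
 replace (k - 0 - 0)%nat with k by lia.
 rewrite (sumR_ext k (fun i => f (k - 1 - i)%nat) (fun i => f (S k - 1 - (1 + i))%nat)). lra.
 intros; f_equal; lia. Qed.

Lemma sumR_split_mul n m f : sumR (n * m) f = sumR n (fun k => sumR m (fun a => f (a + m * k)%nat)).
Proof. induction n; simpl; auto. rewrite Nat.add_comm, sumR_add, IHn.
 f_equal. apply sumR_ext; intros; f_equal; lia. Qed.

Lemma sumR_ge_term k f j : (forall i, (i < k)%nat -> 0 <= f i) -> (j < k)%nat -> f j <= sumR k f.
Proof. induction k; intros H Hj; [lia|]. simpl. destruct (Nat.eq_dec j k).
 subst. assert (0 <= sumR k f) by (apply sumR_nonneg; intros; apply H; lia). lra.
 assert (f j <= sumR k f) by (apply IHk; [intros; apply H; lia| lia]). assert (0 <= f k) by (apply H; lia). lra. Qed.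

Lemma sumR_zero_nonneg k f : (forall i, (i < k)%nat -> 0 <= f i) -> sumR k f = 0 -> forall j, (j < k)%nat -> f j = 0.
Proof. intros H H0 j Hj. assert (f j <= sumR k f) by (apply sumR_ge_term; auto). assert (0 <= f j) by auto. lra. Qed.

Lemma dot_comm k u v : dot k u v = dot k v u.
Proof. unfold dot. apply sumR_ext; intros; ring. Qed.

Lemma dot_ext k u u' v v' : (forall i, (i<k)%nat -> u i = u' i) -> (forall i, (i<k)%nat -> v i = v' i) -> dot k u v = dot k u' v'.
Proof. intros; unfold dot; apply sumR_ext; intros; rewrite H, H0; auto. Qed.

Lemma dot_plus_l k u v w : dot k (fun i => u i + v i) w = dot k u w + dot k v w.
Proof. unfold dot. rewrite <- sumR_plus. apply sumR_ext; intros; ring. Qed.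
Lemma dot_plus_r k u v w : dot k w (fun i => u i + v i) = dot k w u + dot k w v.
Proof. unfold dot. rewrite <- sumR_plus. apply sumR_ext; intros; ring. Qed.
Lemma dot_minus_l k u v w : dot k (fun i => u i - v i) w = dot k u w - dot k v w.
Proof. unfold dot. rewrite <- sumR_minus. apply sumR_ext; intros; ring. Qed.
Lemma dot_minus_r k u v w : dot k w (fun i => u i - v i) = dot k w u - dot k w v.
Proof. unfold dot. rewrite <- sumR_minus. apply sumR_ext; intros; ring. Qed.
Lemma dot_scal_l k c u w : dot k (fun i => c * u i) w = c * dot k u w.
Proof. unfold dot. rewrite <- sumR_scal. apply sumR_ext; intros; ring. Qed.
Lemma dot_scal_r k c u w : dot k w (fun i => c * u i) = c * dot k w u.
Proof. unfold dot. rewrite <- sumR_scal. apply sumR_ext; intros; ring. Qed.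

Lemma dot_mvec p q u X v : dot p u (mvec q X v) = dot q (mvec p (trm X) u) v.
Proof. unfold dot, mvec, trm.
 rewrite (sumR_ext p _ (fun i => sumR q (fun c => u i * X i c * v c))) by (intros; rewrite <- sumR_scal; apply sumR_ext; intros; ring).
 rewrite sumR_swap. apply sumR_ext; intros. rewrite <- sumR_scalr. apply sumR_ext; intros; ring. Qed.

Lemma mvec_mmul k j X Y v i : mvec k (mmul j X Y) v i = mvec j X (mvec k Y v) i.
Proof. unfold mvec, mmul.
 rewrite (sumR_ext k _ (fun c => sumR j (fun d => X i d * Y d c * v c))) by (intros; rewrite <- sumR_scalr; auto).
 rewrite sumR_swap. apply sumR_ext; intros. rewrite <- sumR_scal. apply sumR_ext; intros; ring. Qed.

Lemma mvec_ext k X v w i : (forall c, (c < k)%nat -> v c = w c) -> mvec k X v i = mvec k X w i.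
Proof. intros; unfold mvec; apply sumR_ext; intros; rewrite H; auto. Qed.

Lemma mvec_plus k X v w i : mvec k X (fun c => v c + w c) i = mvec k X v i + mvec k X w i.
Proof. unfold mvec. rewrite <- sumR_plus. apply sumR_ext; intros; ring. Qed.
Lemma mvec_minus k X v w i : mvec k X (fun c => v c - w c) i = mvec k X v i - mvec k X w i.
Proof. unfold mvec. rewrite <- sumR_minus. apply sumR_ext; intros; ring. Qed.
Lemma mvec_scal k X a v i : mvec k X (fun c => a * v c) i = a * mvec k X v i.
Proof. unfold mvec. rewrite <- sumR_scal. apply sumR_ext; intros; ring. Qed.
Lemma mvec_sum k X N (f : nat -> vec) i : mvec k X (fun c => sumR N (fun j => f j c)) i = sumR N (fun j => mvec k X (f j) i).
Proof. unfold mvec. rewrite <- sumR_swap. apply sumR_ext; intros. rewrite <- sumR_scal. auto. Qed.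

Lemma mmul_assoc k j X Y Z a b : mmul k (mmul j X Y) Z a b = mmul j X (mmul k Y Z) a b.
Proof. unfold mmul.
 rewrite (sumR_ext k _ (fun c => sumR j (fun d => X a d * Y d c * Z c b))) by (intros; rewrite <- sumR_scalr; auto).
 rewrite sumR_swap. apply sumR_ext; intros. rewrite <- sumR_scal. apply sumR_ext; intros; ring. Qed.

Lemma sumR_S k f : sumR (S k) f = f O + sumR k (fun i => f (S i)).
Proof. replace (S k) with (1 + k)%nat by lia. rewrite sumR_add. simpl. lra. Qed.

Lemma sumR_indic k j (K : nat -> R) a : (j < k)%nat ->
  sumR k (fun i => K i * (if Nat.eqb i j then a else 0)) = K j * a.
Proof. intros Hj. rewrite (sumR_single k j). rewrite Nat.eqb_refl; auto. auto.
 intros. destruct (Nat.eqb_spec i j); [lia| ring]. Qed.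

Lemma frr_surj n : forall c K, full_row_rank n c K -> forall z : vec,
  exists w : vec, forall i, (i < n)%nat -> sumR c (fun j => K i j * w j) = z i.
Proof.
induction n; intros c K HK z.
- exists (fun _ => 0). intros; lia.
- assert (Hp : exists j0, (j0 < c)%nat /\ K O j0 <> 0).
  { apply NNPP; intro Hn.
    assert (H0 : (fun i : nat => if Nat.eqb i 0 then 1 else 0) O = 0).
    { refine (HK (fun i : nat => if Nat.eqb i 0 then 1 else 0) _ O _); [| lia]. intros j Hj. rewrite sumR_S. simpl.
      rewrite sumR_zero. assert (K O j = 0). { apply NNPP; intro. apply Hn; eauto. } lra.
      intros; simpl; ring. }
    simpl in H0. lra. }
  destruct Hp as [j0 [Hj0 Hpiv]].
  set (piv := K O j0) in *.
  set (K' := fun i j => K (S i) j - (K (S i) j0 / piv) * K O j).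
  assert (HK' : full_row_rank n c K').
  { intros lam Hl i Hi.
    set (v := fun i => match i with O => - sumR n (fun i => lam i * K (S i) j0) / piv | S i' => lam i' end).
    assert (Hv : forall i, (i < S n)%nat -> v i = 0).
    { apply (HK v). intros j Hj. rewrite sumR_S. simpl.
      rewrite <- (Hl j Hj). unfold K'.
      rewrite (sumR_ext n (fun i => lam i * (K (S i) j - K (S i) j0 / piv * K O j))
         (fun i => lam i * K (S i) j - (K O j / piv) * (lam i * K (S i) j0))) by (intros; field; auto).
      rewrite sumR_minus, sumR_scal. field. auto. }
    apply (Hv (S i)). lia. }
  destruct (IHn c K' HK' (fun i => z (S i) - (K (S i) j0 / piv) * z O)) as [w' Hw'].
  set (al := (z O - sumR c (fun j => K O j * w' j)) / piv).
  exists (fun j => w' j + (if Nat.eqb j j0 then al else 0)).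
  intros i Hi.
  rewrite (sumR_ext c _ (fun j => K i j * w' j + K i j * (if Nat.eqb j j0 then al else 0))) by (intros; ring).
  rewrite sumR_plus, sumR_indic by auto.
  destruct i.
  + unfold al. fold piv. field. auto.
  + assert (Hi' : (i < n)%nat) by lia. specialize (Hw' i Hi'). unfold K' in Hw'.
    rewrite (sumR_ext c _ (fun j => K (S i) j * w' j - K (S i) j0 / piv * (K O j * w' j))) in Hw' by (intros; ring).
    rewrite sumR_minus, sumR_scal in Hw'. unfold al. fold piv.
    replace (K (S i) j0 * ((z 0%nat - sumR c (fun j : nat => K 0%nat j * w' j)) / piv))
     with (K (S i) j0 / piv * z O - K (S i) j0 / piv * sumR c (fun j : nat => K 0%nat j * w' j)) by (field; auto).
    lra.
Qed.

Lemma D_sumR k (f : nat -> R -> R) (f' : nat -> R) t :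
  (forall d, (d < k)%nat -> derivable_pt_lim (f d) t (f' d)) ->
  derivable_pt_lim (fun t => sumR k (fun d => f d t)) t (sumR k f').
Proof. induction k; intros H; simpl.
 apply derivable_pt_lim_const.
 apply (derivable_pt_lim_plus (fun t => sumR k (fun d => f d t)) (f k)).
 apply IHk; intros; apply H; lia. apply H; lia. Qed.

Definition pe (a : nat -> R) (D : nat) (c t : R) := sumR D (fun d => a d * (t - c) ^ d).
Definition dc (a : nat -> R) : nat -> R := fun d => INR (S d) * a (S d).
Fixpoint dcn (i : nat) (a : nat -> R) : nat -> R :=
  match i with O => a | S i' => dcn i' (dc a) end.

Lemma dcn_S i a : dcn (S i) a = dc (dcn i a).
Proof. revert a; induction i; intros a; simpl; auto. rewrite <- IHi. auto. Qed.

Lemma dc_supp D a : (forall d, (D <= d)%nat -> a d = 0) -> forall d, (D <= d)%nat -> dc a d = 0.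
Proof. intros H d Hd. unfold dc. rewrite H by lia. ring. Qed.

Lemma dcn_supp D i a : (forall d, (D <= d)%nat -> a d = 0) -> forall d, (D <= d)%nat -> dcn i a d = 0.
Proof. revert a; induction i; intros a H; simpl; auto. apply IHi. apply dc_supp; auto. Qed.

Lemma dcn_0 i a : dcn i a O = INR (fact i) * a i.
Proof. revert a; induction i; intros a. simpl; ring.
 simpl dcn. rewrite IHi. unfold dc. rewrite fact_simpl, mult_INR. ring. Qed.

Lemma D_powc c d t : derivable_pt_lim (fun t => (t - c) ^ d) t (INR d * (t - c) ^ pred d).
Proof.
 assert (H := derivable_pt_lim_comp (fun t => t - c) (fun y => y ^ d) t 1 (INR d * (t - c) ^ pred d)).
 replace (INR d * (t - c) ^ pred d) with (INR d * (t - c) ^ pred d * 1) by ring.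
 apply H. replace 1 with (1 - 0) by ring. apply derivable_pt_lim_minus. apply derivable_pt_lim_id. apply derivable_pt_lim_const.
 apply derivable_pt_lim_pow. Qed.

Lemma pe_deriv a D c t : (forall d, (D <= d)%nat -> a d = 0) ->
  derivable_pt_lim (pe a D c) t (pe (dc a) D c t).
Proof. intros H. unfold pe.
 apply (derivable_pt_lim_ext (fun t => sumR D (fun d => (fun d t => a d * (t - c) ^ d) d t))); [intros; auto|].
 assert (HD := D_sumR D (fun d t => a d * (t - c) ^ d) (fun d => a d * (INR d * (t - c) ^ pred d)) t).
 replace (sumR D (fun d : nat => dc a d * (t - c) ^ d)) with (sumR D (fun d => a d * (INR d * (t - c) ^ pred d))).
 apply HD. intros. apply derivable_pt_lim_scal. apply D_powc.
 destruct D. simpl; auto.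
 rewrite sumR_S. replace (S D) with (D + 1)%nat by lia. rewrite sumR_add. simpl sumR at 2.
 simpl sumR at 3. unfold dc at 2. rewrite (H (S (D + 0))) by lia. simpl INR at 1.
 rewrite Rmult_0_l, Rmult_0_r, Rplus_0_l, Rmult_0_r, Rmult_0_l, Rplus_0_l, Rplus_0_r.
 apply sumR_ext. intros. unfold dc. simpl pred. ring. Qed.

Lemma pe_at_c a D c : (0 < D)%nat -> pe a D c c = a O.
Proof. intros HD. unfold pe. destruct D; [lia|]. rewrite sumR_S. rewrite sumR_zero. simpl. ring.
 intros. replace (c - c) with 0 by ring. simpl. ring. Qed.

Lemma sum_f_sumR g j : sum_f_R0 g j = sumR (S j) g.
Proof. induction j. simpl. ring. rewrite tech5, IHj. simpl. auto. Qed.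

Lemma C_n0 j : Binomial.C j 0 = 1.
Proof. unfold Binomial.C. rewrite Nat.sub_0_r. simpl. field. apply INR_fact_neq_0. Qed.

Definition bcoef (k j : nat) (c : R) : nat -> R :=
  fun d => if andb (Nat.leb k d) (Nat.leb d (k + j)) then Binomial.C j (d - k) * c ^ (j - (d - k)) else 0.

Lemma bcoef_id k j c x : x ^ k * (x + c) ^ j = sumR (k + S j) (fun d => bcoef k j c d * x ^ d).
Proof. rewrite binomial, sum_f_sumR, sumR_add. rewrite (sumR_zero k (fun d => bcoef k j c d * x ^ d)).
 rewrite Rplus_0_l, <- sumR_scal. apply sumR_ext. intros i Hi. unfold bcoef.
 replace (Nat.leb k (k + i) && Nat.leb (k + i) (k + j))%bool with true.
 replace (k + i - k)%nat with i by lia. rewrite pow_add. ring.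
 symmetry. apply andb_true_intro; split; apply Nat.leb_le; lia.
 intros i Hi. unfold bcoef. replace (Nat.leb k i) with false. simpl; ring. symmetry; apply Nat.leb_gt; lia. Qed.

Lemma bcoef_low k j c d : (d < k)%nat -> bcoef k j c d = 0.
Proof. intros. unfold bcoef. replace (Nat.leb k d) with false. auto. symmetry; apply Nat.leb_gt; lia. Qed.
Lemma bcoef_high k j c d : (k + S j <= d)%nat -> bcoef k j c d = 0.
Proof. intros. unfold bcoef. replace (Nat.leb d (k + j)) with false. rewrite Bool.andb_false_r; auto. symmetry; apply Nat.leb_gt; lia. Qed.
Lemma bcoef_k k j c : bcoef k j c k = c ^ j.
Proof. unfold bcoef. replace (Nat.leb k k && Nat.leb k (k + j))%bool with true.
 rewrite Nat.sub_diag, C_n0, Nat.sub_0_r. ring. symmetry; apply andb_true_intro; split; apply Nat.leb_le; lia. Qed.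

(* the family g_s(t) = t^s (t-T)^n and its derivatives *)
Definition gfam (n s : nat) (T : R) (i : nat) (t : R) : R :=
  pe (dcn i (bcoef s n (- T))) (s + S n) 0 t.

Lemma gfam_deriv n s T i t : derivable_pt_lim (gfam n s T i) t (gfam n s T (S i) t).
Proof. unfold gfam. rewrite dcn_S. apply pe_deriv. apply dcn_supp with (D := (s + S n)%nat).
 intros; apply bcoef_high; lia. Qed.

Lemma gfam_at0_low n s T i : (i < s)%nat -> gfam n s T i 0 = 0.
Proof. intros. unfold gfam. rewrite pe_at_c by lia. rewrite dcn_0, bcoef_low by lia. ring. Qed.

Lemma gfam_at0_s n s T : T <> 0 -> gfam n s T s 0 <> 0.
Proof. intros HT. unfold gfam. rewrite pe_at_c by lia. rewrite dcn_0, bcoef_k.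
 apply Rmult_integral_contrapositive; split. apply INR_fact_neq_0. apply pow_nonzero. lra. Qed.

Lemma gfam_atT n s T i : (i < n)%nat -> gfam n s T i T = 0.
Proof. intros Hi.
 set (h := fun i t => pe (dcn i (bcoef n s T)) (s + S n) T t).
 assert (Hh : forall i t, derivable_pt_lim (h i) t (h (S i) t)).
 { intros. unfold h. rewrite dcn_S. apply pe_deriv. apply dcn_supp with (D := (s + S n)%nat).
   intros; apply bcoef_high; lia. }
 assert (Heq : forall i t, gfam n s T i t = h i t).
 { induction i0; intros t.
   - unfold gfam, h. simpl dcn. unfold pe.
     rewrite (sumR_ext _ (fun d => bcoef s n (- T) d * (t - 0) ^ d) (fun d => bcoef s n (-T) d * t ^ d)) by (intros; rewrite Rminus_0_r; auto).
     replace (s + S n)%nat with (n + S s)%nat at 2 by lia.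
     rewrite <- bcoef_id, <- bcoef_id. replace (t - T + T) with t by ring. unfold Rminus. ring.
   - apply uniqueness_limite with (f := gfam n s T i0) (x := t). apply gfam_deriv.
     replace (gfam n s T i0) with (h i0) by (extensionality u; auto). apply Hh. }
 rewrite Heq. unfold h. rewrite pe_at_c by lia. rewrite dcn_0, bcoef_low by lia. ring. Qed.

Definition PB (n m : nat) (A B : mat) (k : nat) (u : vec) : vec :=
  mvec n (mpow n A k) (mvec m B u).

Lemma PB_S n m A B k u i : mvec n A (PB n m A B k u) i = PB n m A B (S k) u i.
Proof. unfold PB. simpl mpow. rewrite mvec_mmul. auto. Qed.

Lemma mvec_idm n u i : (i < n)%nat -> mvec n idm u i = u i.
Proof. intros. unfold mvec. rewrite (sumR_single n i). unfold idm. rewrite Nat.eqb_refl. ring. auto.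
 intros. unfold idm. destruct (Nat.eqb_spec i i0); [lia| ring]. Qed.

Lemma PB_0 n m A B u i : (i < n)%nat -> PB n m A B 0 u i = mvec m B u i.
Proof. intros; unfold PB; simpl. apply mvec_idm; auto. Qed.

Lemma PB_lin n m A B k a u v i : PB n m A B k (fun c => u c - a * v c) i = PB n m A B k u i - a * PB n m A B k v i.
Proof. unfold PB. rewrite <- mvec_scal, <- mvec_minus. apply mvec_ext. intros. rewrite mvec_minus, mvec_scal. auto. Qed.

Lemma PB_lin2 n m A B k a u v i : PB n m A B k (fun c => a * u c + v c) i = a * PB n m A B k u i + PB n m A B k v i.
Proof. unfold PB. rewrite <- mvec_scal, <- mvec_plus. apply mvec_ext. intros. rewrite mvec_plus, mvec_scal. auto. Qed.

Lemma PB_scal n m A B k a u i : PB n m A B k (fun c => a * u c) i = a * PB n m A B k u i.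
Proof. unfold PB. rewrite <- mvec_scal. apply mvec_ext. intros. rewrite mvec_scal. auto. Qed.

Lemma PB_ext n m A B k u v i : (forall c, (c < m)%nat -> u c = v c) -> PB n m A B k u i = PB n m A B k v i.
Proof. intros. unfold PB. apply mvec_ext. intros. apply mvec_ext. auto. Qed.

Lemma sumR_Sr k f : sumR (S k) f = sumR k f + f k.
Proof. reflexivity. Qed.

Section Flat.
Variables (n m : nat) (A B : mat) (Hm : nat -> vec -> vec).

Fixpoint Phi (j : nat) (w : vec) (g : nat -> R) (d : nat) : vec :=
  match j with
  | O => fun a => g d * w a
  | S j' => fun a => Phi j' w g (S d) a - g d * Hm (n - 1 - j')%nat w a
  end.

Definition Yf (w : vec) (g : nat -> R) : vec :=
  fun i => sumR n (fun j => PB n m A B (n - 1 - j) (Phi j w g O) i).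

Definition Vf (w : vec) (g : nat -> R) : vec :=
  fun a => Phi (n - 1) w g 1 a - g O * Hm O w a.

Definition shiftg (g : nat -> R) : nat -> R := fun i => g (S i).

Lemma Phi_shift j w g d a : Phi j w (shiftg g) d a = Phi j w g (S d) a.
Proof. revert d; induction j; intros d; simpl; auto. rewrite IHj. auto. Qed.

Lemma Phi_supp j w g d a : (forall i, (i <= j + d)%nat -> g i = 0) -> Phi j w g d a = 0.
Proof. revert d; induction j; intros d H; simpl. rewrite H by lia; ring.
 rewrite IHj by (intros; apply H; lia). rewrite H by lia. ring. Qed.

Lemma Phi_lead j w g d a k : (forall i, (i < k)%nat -> g i = 0) -> (j + d <= k)%nat -> Phi j w g d a = g (j + d)%nat * w a.
Proof. revert d; induction j; intros d H Hk; simpl. auto.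
 rewrite IHj by (auto; lia). rewrite (H d) by lia. replace (j + S d)%nat with (S (j + d)) by lia. ring. Qed.

Lemma Phi_lin j w g1 g2 al d a : Phi j w (fun i => al * g1 i + g2 i) d a = al * Phi j w g1 d a + Phi j w g2 d a.
Proof. revert d; induction j; intros d; simpl. ring. rewrite IHj. ring. Qed.

Lemma Yf_lin w g1 g2 al i : Yf w (fun i => al * g1 i + g2 i) i = al * Yf w g1 i + Yf w g2 i.
Proof. unfold Yf. rewrite <- sumR_scal, <- sumR_plus. apply sumR_ext; intros.
 rewrite <- PB_lin2. apply PB_ext. intros. apply Phi_lin. Qed.

Lemma Yf_zero w g i : (forall i, (i < n)%nat -> g i = 0) -> Yf w g i = 0.
Proof. intros H. unfold Yf. apply sumR_zero. intros j Hj.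
 rewrite (PB_ext _ _ _ _ _ _ (fun _ => 0 * 0)). rewrite PB_scal. ring.
 intros. rewrite Phi_supp. ring. intros; apply H; lia. Qed.

End Flat.

Lemma flat_dyn n m A B Hm (HHm : forall w i, (i < n)%nat -> PB n m A B n w i = sumR n (fun k => PB n m A B k (Hm k w) i)) w g i : (0 < n)%nat -> (i < n)%nat ->
  Yf n m A B Hm w (shiftg g) i = mvec n A (Yf n m A B Hm w g) i + mvec m B (Vf n Hm w g) i.
Proof.
 intros Hn Hi. destruct n as [|n']; [lia|].
 set (S1 := sumR n' (fun j => PB (S n') m A B (n' - j) (Phi (S n') Hm j w g 1) i)).
 set (S2 := sumR n' (fun j => PB (S n') m A B (n' - j) (Hm (n' - j)%nat w) i)).
 assert (E1 : Yf (S n') m A B Hm w (shiftg g) i = S1 + PB (S n') m A B 0 (Phi (S n') Hm n' w g 1) i).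
 { unfold Yf. rewrite sumR_Sr.
   replace (S n' - 1 - n')%nat with O by lia.
   rewrite (PB_ext _ _ _ _ _ _ (Phi (S n') Hm n' w g 1)) by (intros; apply Phi_shift).
   unfold S1. f_equal. apply sumR_ext; intros j Hj. replace (S n' - 1 - j)%nat with (n' - j)%nat by lia.
   apply PB_ext; intros; apply Phi_shift. }
 assert (E2 : mvec (S n') A (Yf (S n') m A B Hm w g) i = g O * PB (S n') m A B (S n') w i + S1 - g O * S2).
 { unfold Yf. rewrite mvec_sum.
   rewrite (sumR_ext _ _ (fun j => PB (S n') m A B (S (S n' - 1 - j)) (Phi (S n') Hm j w g 0) i)) by (intros; apply PB_S).
   rewrite sumR_S. replace (S (S n' - 1 - 0)) with (S n') by lia.
   rewrite (PB_ext _ _ _ _ _ _ (fun c => g O * w c)) by (intros; simpl; auto).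
   rewrite PB_scal.
   rewrite (sumR_ext n' _ (fun j => PB (S n') m A B (n' - j) (Phi (S n') Hm j w g 1) i - g O * PB (S n') m A B (n' - j) (Hm (n' - j)%nat w) i)).
   2:{ intros j Hj. replace (S (S n' - 1 - S j)) with (n' - j)%nat by lia. simpl Phi.
       rewrite <- PB_lin. apply PB_ext. intros. rewrite Nat.sub_0_r. auto. }
   rewrite sumR_minus, sumR_scal. unfold S1, S2. ring. }
 assert (E3 : PB (S n') m A B (S n') w i = PB (S n') m A B 0 (Hm O w) i + S2).
 { rewrite HHm by auto. rewrite sumR_S. f_equal. unfold S2. rewrite (sumR_rev n').
   apply sumR_ext; intros. replace (S (n' - 1 - i0))%nat with (n' - i0)%nat by lia. auto. }
 assert (E4 : mvec m B (Vf (S n') Hm w g) i = PB (S n') m A B 0 (Phi (S n') Hm n' w g 1) i - g O * PB (S n') m A B 0 (Hm O w) i).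
 { unfold Vf. rewrite mvec_minus, mvec_scal, !PB_0 by auto. replace (S n' - 1)%nat with n' by lia. auto. }
 rewrite E1, E2, E3, E4. ring.
Qed.

Lemma D_mulc f c t l : derivable_pt_lim f t l -> derivable_pt_lim (fun t => f t * c) t (l * c).
Proof. intros H. replace (l * c) with (c * l) by ring.
 apply (derivable_pt_lim_ext (fun t => c * f t)). intros; ring. apply derivable_pt_lim_scal; auto. Qed.

Section Flat2.
Variables (n m : nat) (A B : mat) (Hm : nat -> vec -> vec).
Lemma Phi_deriv (gam : R -> nat -> R) j w d a t :
  (forall i t, derivable_pt_lim (fun t => gam t i) t (gam t (S i))) ->
  derivable_pt_lim (fun t => Phi n Hm j w (gam t) d a) t (Phi n Hm j w (gam t) (S d) a).
Proof. intros H. revert d; induction j; intros d; simpl.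
 apply D_mulc. apply H.
 apply derivable_pt_lim_minus. apply IHj. apply D_mulc. apply H. Qed.

End Flat2.

Definition ej (a : nat) : vec := fun b => if Nat.eqb b a then 1 else 0.

Lemma divmod_mk m a k : (0 < m)%nat -> (a < m)%nat -> ((a + m * k) / m = k /\ (a + m * k) mod m = a)%nat.
Proof. intros Hm Ha. rewrite (Nat.mul_comm m k). split.
 rewrite Nat.div_add by lia. rewrite Nat.div_small by lia. lia.
 rewrite Nat.mod_add by lia. apply Nat.mod_small; lia. Qed.

Lemma PB_kalman n m A B k u i : (0 < m)%nat ->
  PB n m A B k u i = sumR m (fun b => kalman n m A B i (b + m * k)%nat * u b).
Proof. intros Hm. unfold PB. rewrite <- mvec_mmul. unfold mvec. apply sumR_ext. intros b Hb.
 unfold kalman. destruct (divmod_mk m b k Hm Hb) as [E1 E2]. rewrite E1, E2. auto. Qed.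

Lemma PB_ej n m A B k a i : (0 < m)%nat -> (a < m)%nat -> PB n m A B k (ej a) i = kalman n m A B i (a + m * k)%nat.
Proof. intros. rewrite PB_kalman by auto. unfold ej. rewrite (sumR_indic m a (fun b => kalman n m A B i (b + m * k)%nat) 1) by auto. ring. Qed.

Lemma dot_sum n lam N (f : nat -> vec) : dot n lam (fun r => sumR N (fun j => f j r)) = sumR N (fun j => dot n lam (f j)).
Proof. unfold dot. rewrite <- sumR_swap. apply sumR_ext; intros. rewrite <- sumR_scal. auto. Qed.

Lemma PB_basis n m A B k u i : (0 < m)%nat -> PB n m A B k u i = sumR m (fun a => u a * PB n m A B k (ej a) i).
Proof. intros Hm. rewrite PB_kalman by auto. apply sumR_ext. intros a Ha. rewrite PB_ej by auto. ring. Qed.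

Lemma dot_PB_basis n m A B k lam : (0 < m)%nat ->
  (forall a, (a < m)%nat -> dot n lam (PB n m A B k (ej a)) = 0) -> forall u, dot n lam (PB n m A B k u) = 0.
Proof. intros Hm H u. rewrite (dot_ext n lam lam _ (fun r => sumR m (fun a => u a * PB n m A B k (ej a) r))).
 rewrite dot_sum. apply sumR_zero. intros a Ha. rewrite dot_scal_r, H by auto. ring.
 auto. intros; apply PB_basis; auto. Qed.

Lemma exists_Hm n m A B : controllable n m A B -> (0 < m)%nat ->
  exists Hm : nat -> vec -> vec, forall w i, (i < n)%nat -> PB n m A B n w i = sumR n (fun k => PB n m A B k (Hm k w) i).
Proof. intros Hc Hm.
 assert (H : forall w, exists cf : vec, forall i, (i < n)%nat -> sumR (n * m) (fun j => kalman n m A B i j * cf j) = PB n m A B n w i).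
 { intros w. apply frr_surj. apply Hc. }
 exists (fun k w => fun b => proj1_sig (constructive_indefinite_description _ (H w)) (b + m * k)%nat).
 intros w i Hi. destruct (constructive_indefinite_description _ (H w)) as [cf Hcf]. simpl.
 rewrite <- Hcf by auto. rewrite sumR_split_mul. apply sumR_ext. intros k Hk. rewrite PB_kalman by auto. auto. Qed.

Lemma kalman_dual n m A B lam : controllable n m A B -> (0 < m)%nat ->
  (forall k a, (k < n)%nat -> (a < m)%nat -> dot n lam (PB n m A B k (ej a)) = 0) -> forall i, (i < n)%nat -> lam i = 0.
Proof. intros Hc Hm H. apply Hc. intros j Hj.
 assert (Hj' : j = (j mod m + m * (j / m))%nat) by (rewrite (Nat.div_mod_eq j m) at 1; lia).
 specialize (H (j / m)%nat (j mod m)%nat).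
 rewrite <- H. unfold dot. apply sumR_ext. intros i Hi. rewrite PB_ej by (auto; apply Nat.mod_upper_bound; lia).
 rewrite <- Hj'. auto. apply Nat.div_lt_upper_bound; lia. apply Nat.mod_upper_bound; lia. Qed.

Section Steer.
Variables (n m : nat) (A B : mat) (T : R) (Hm : nat -> vec -> vec).
Hypothesis HHm : forall w i, (i < n)%nat -> PB n m A B n w i = sumR n (fun k => PB n m A B k (Hm k w) i).
Hypothesis Hn : (0 < n)%nat.
Hypothesis Hm0 : (0 < m)%nat.
Hypothesis HT : T <> 0.
Hypothesis Hc : controllable n m A B.

Definition gs (s : nat) : nat -> R := fun i => gfam n s T i 0.
Notation Y := (Yf n m A B Hm).

Lemma Q_ind lam w : (forall s, (s < n)%nat -> dot n lam (Y w (gs s)) = 0) ->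
  forall t, (t <= n)%nat -> forall g, (forall i, (i < n - t)%nat -> g i = 0) -> dot n lam (Y w g) = 0.
Proof. intros Hf t. induction t; intros Ht g Hg.
 - unfold dot. apply sumR_zero. intros i Hi. rewrite Yf_zero. ring. intros; apply Hg; lia.
 - set (s := (n - S t)%nat). assert (Hs : (s < n)%nat) by (unfold s; lia).
   set (al := g s / gs s s).
   assert (Hgs : gs s s <> 0) by (apply gfam_at0_s; auto).
   set (g' := fun i => g i - al * gs s i).
   assert (E : g = fun i => al * gs s i + g' i) by (extensionality i; unfold g'; ring).
   rewrite (dot_ext n lam lam _ (fun i => al * Y w (gs s) i + Y w g' i)); auto.
   2:{ intros. rewrite E. apply Yf_lin. }
   rewrite dot_plus_r, dot_scal_r, Hf by auto. rewrite IHt. ring. lia.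
   intros i Hi. unfold g'. destruct (Nat.eq_dec i s).
   + subst i. unfold al. field. auto.
   + rewrite Hg by (unfold s in *; lia). unfold gs. rewrite gfam_at0_low by (unfold s in *; lia). ring. Qed.

Definition eseq (i : nat) : nat -> R := fun d => if Nat.eqb d i then 1 else 0.

Lemma extract lam : (forall a, (a < m)%nat -> forall g, dot n lam (Y (ej a) g) = 0) ->
  forall t, (t <= n)%nat -> forall i, (n - t <= i < n)%nat -> forall a, (a < m)%nat -> dot n lam (PB n m A B (n - 1 - i) (ej a)) = 0.
Proof. intros H t. induction t; intros Ht i Hi a Ha. lia.
 destruct (Nat.eq_dec i (n - S t)%nat).
 2:{ apply IHt; lia. }
 subst i. specialize (H a Ha (eseq (n - S t))).
 rewrite <- H. unfold Yf. rewrite dot_sum.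
 rewrite (sumR_single n (n - S t)%nat).
 - apply dot_ext; auto. intros r Hr. apply PB_ext. intros c Hc'. rewrite (Phi_lead n Hm _ _ _ _ _ (n - S t)%nat).
   unfold eseq. rewrite Nat.add_0_r, Nat.eqb_refl. ring. intros i Hi'. unfold eseq. destruct (Nat.eqb_spec i (n - S t)); [lia| auto]. lia.
 - lia.
 - intros j Hj Hne. destruct (Nat.lt_ge_cases j (n - S t)).
   + unfold dot. apply sumR_zero. intros r Hr. rewrite (PB_ext _ _ _ _ _ _ (fun c => 0 * 0)). rewrite PB_scal. ring.
     intros. rewrite Phi_supp. ring. intros i Hi'. unfold eseq. destruct (Nat.eqb_spec i (n - S t)); [lia| auto].
   + apply dot_PB_basis; auto. intros a' Ha'. apply IHt; lia. Qed.

Lemma fam_frr : full_row_rank n (n * m) (fun i j => Y (ej (j mod m)) (gs (j / m)) i).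
Proof. intros lam Hl.
 assert (Hf : forall a, (a < m)%nat -> forall s, (s < n)%nat -> dot n lam (Y (ej a) (gs s)) = 0).
 { intros a Ha s Hs. destruct (divmod_mk m a s Hm0 Ha) as [E1 E2].
   assert (Hj : (a + m * s < n * m)%nat) by nia.
   rewrite <- (Hl _ Hj). unfold dot. apply sumR_ext; intros. rewrite E1, E2. auto. }
 apply (kalman_dual n m A B lam Hc Hm0). intros k a Hk Ha.
 replace k with (n - 1 - (n - 1 - k))%nat by lia.
 apply (extract lam) with (t := n); try lia.
 intros a' Ha' g. apply (Q_ind lam (ej a')) with (t := n). intros; apply Hf; auto. lia. intros; lia. Qed.

Lemma PB_deriv k (u : R -> vec) (u' : vec) i t :
  (forall b, (b < m)%nat -> derivable_pt_lim (fun t => u t b) t (u' b)) ->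
  derivable_pt_lim (fun t => PB n m A B k (u t) i) t (PB n m A B k u' i).
Proof. intros H. unfold PB, mvec.
 apply (D_sumR n (fun c t => mpow n A k i c * sumR m (fun b => B c b * u t b))). intros c Hc'.
 apply derivable_pt_lim_scal. apply (D_sumR m (fun b t => B c b * u t b)). intros b Hb. apply derivable_pt_lim_scal. auto. Qed.

Definition gam (s : nat) (t : R) : nat -> R := fun i => gfam n s T i t.

Lemma gam_deriv s : forall i t, derivable_pt_lim (fun t => gam s t i) t (gam s t (S i)).
Proof. intros. apply gfam_deriv. Qed.

Lemma Y_deriv w s i t : derivable_pt_lim (fun t => Y w (gam s t) i) t (Y w (shiftg (gam s t)) i).
Proof. unfold Yf. apply (D_sumR n (fun j t => PB n m A B (n - 1 - j) (Phi n Hm j w (gam s t) 0) i)).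
 intros j Hj. apply PB_deriv. intros b Hb. rewrite Phi_shift. apply Phi_deriv. apply gam_deriv. Qed.

Lemma V_deriv w s a t : derivable_pt_lim (fun t => Vf n Hm w (gam s t) a) t (Vf n Hm w (shiftg (gam s t)) a).
Proof. unfold Vf. apply derivable_pt_lim_minus. rewrite Phi_shift. apply Phi_deriv. apply gam_deriv.
 apply D_mulc. apply gam_deriv. Qed.

Lemma steer0 (x0 : vec) : exists (y v : R -> vec),
  (forall i, (i < n)%nat -> y 0 i = x0 i) /\ (forall i, (i < n)%nat -> y T i = 0) /\
  (forall t i, (i < n)%nat -> derivable_pt_lim (fun t => y t i) t (mvec n A (y t) i + mvec m B (v t) i)) /\
  (forall t a, continuity_pt (fun t => v t a) t).
Proof.
 destruct (frr_surj _ _ _ fam_frr x0) as [cw Hcw].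
 exists (fun t i => sumR (n * m) (fun j => cw j * Y (ej (j mod m)) (gam (j / m) t) i)).
 exists (fun t a => sumR (n * m) (fun j => cw j * Vf n Hm (ej (j mod m)) (gam (j / m) t) a)).
 split; [|split; [|split]].
 - intros i Hi. rewrite <- Hcw by auto. apply sumR_ext; intros. unfold gam, gs. ring.
 - intros i Hi. apply sumR_zero. intros j Hj. rewrite Yf_zero. ring. intros k Hk. unfold gam. apply gfam_atT; auto.
 - intros t i Hi.
   apply (derivable_pt_lim_ext (fun t => sumR (n * m) (fun j => (fun j t => cw j * Y (ej (j mod m)) (gam (j / m) t) i) j t))); [intros; auto|].
   replace (mvec n A _ i + mvec m B _ i) with (sumR (n * m) (fun j => cw j * Y (ej (j mod m)) (shiftg (gam (j / m) t)) i)).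
   apply D_sumR. intros j Hj. apply derivable_pt_lim_scal. apply Y_deriv.
   rewrite !mvec_sum, <- sumR_plus. apply sumR_ext. intros j Hj. rewrite !mvec_scal. rewrite flat_dyn; auto. ring.
 - intros t a. apply derivable_continuous_pt.
   exists (sumR (n * m) (fun j => cw j * Vf n Hm (ej (j mod m)) (shiftg (gam (j / m) t)) a)).
   apply (derivable_pt_lim_ext (fun t => sumR (n * m) (fun j => (fun j t => cw j * Vf n Hm (ej (j mod m)) (gam (j / m) t) a) j t))); [intros; auto|].
   apply D_sumR. intros j Hj. apply derivable_pt_lim_scal. apply V_deriv.
Qed.

End Steer.

Definition negm (A : mat) : mat := fun i j => - A i j.

Lemma mpow_neg n A k i j : mpow n (negm A) k i j = (-1) ^ k * mpow n A k i j.
Proof. revert i j; induction k; intros; simpl. ring.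
 unfold mmul. rewrite <- sumR_scal. apply sumR_ext. intros c Hc. rewrite IHk. unfold negm. ring. Qed.

Lemma mvec_neg k X u i : mvec k (negm X) u i = - mvec k X u i.
Proof. unfold mvec, negm. replace (- sumR k (fun c => X i c * u c)) with ((-1) * sumR k (fun c => X i c * u c)) by ring.
 rewrite <- sumR_scal. apply sumR_ext; intros; ring. Qed.

Lemma mmul_neg n A B k i a : mmul n (mpow n (negm A) k) (negm B) i a = - (-1) ^ k * mmul n (mpow n A k) B i a.
Proof. unfold mmul. rewrite <- sumR_scal. apply sumR_ext. intros c Hc. rewrite mpow_neg. unfold negm. ring. Qed.

Lemma controllable_neg n m A B : controllable n m A B -> controllable n m (negm A) (negm B).
Proof. intros Hc v Hv. apply Hc. intros j Hj. specialize (Hv j Hj).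
 unfold kalman in *.
 rewrite (sumR_ext n _ (fun i => (- (-1) ^ (j / m)) * (v i * mmul n (mpow n A (j / m)) B i (j mod m)))) in Hv.
 rewrite sumR_scal in Hv. assert (H1 : (- (-1) ^ (j / m)) <> 0). { apply Ropp_neq_0_compat, pow_nonzero. lra. }
 apply (Rmult_eq_reg_l (- (-1) ^ (j / m))); auto. rewrite Hv. ring.
 intros i Hi. rewrite mmul_neg. ring. Qed.

Lemma D_eq f t l l' : derivable_pt_lim f t l -> l = l' -> derivable_pt_lim f t l'.
Proof. intros H E; subst; auto. Qed.

Lemma steer n m A B T : controllable n m A B -> (0 < n)%nat -> T <> 0 -> forall x0 p : vec,
  exists (y v : R -> vec),
  (forall i, (i < n)%nat -> y 0 i = x0 i) /\ (forall i, (i < n)%nat -> y T i = p i) /\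
  (forall t i, (i < n)%nat -> derivable_pt_lim (fun t => y t i) t (mvec n A (y t) i + mvec m B (v t) i)) /\
  (forall t a, continuity_pt (fun t => v t a) t).
Proof. intros Hc Hn HT x0 p.
 assert (Hm : (0 < m)%nat).
 { destruct m; [|lia]. exfalso. assert (H := Hc (fun _ => 1)). assert (1 = 0); [|lra].
   apply (H) with (i := O); auto. intros; lia. }
 destruct (exists_Hm n m A B Hc Hm) as [H1 HH1].
 destruct (exists_Hm n m _ _ (controllable_neg n m A B Hc) Hm) as [H2 HH2].
 destruct (steer0 n m A B T H1 HH1 Hn Hm HT Hc x0) as [y1 [v1 [Y10 [Y1T [Y1d Y1c]]]]].
 destruct (steer0 n m _ _ T H2 HH2 Hn Hm HT (controllable_neg n m A B Hc) p) as [y2 [v2 [Y20 [Y2T [Y2d Y2c]]]]].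
 exists (fun t i => y1 t i + y2 (T - t) i), (fun t a => v1 t a + v2 (T - t) a).
 split; [|split; [|split]].
 - intros i Hi. rewrite Y10, Rminus_0_r, Y2T by auto. ring.
 - intros i Hi. rewrite Y1T, Rminus_diag, Y20 by auto. ring.
 - intros t i Hi. eapply D_eq.
   apply (derivable_pt_lim_plus (fun t => y1 t i) (fun t => y2 (T - t) i)). apply Y1d; auto.
   apply (derivable_pt_lim_comp (fun t => T - t) (fun s => y2 s i)).
   apply derivable_pt_lim_minus. apply derivable_pt_lim_const. apply derivable_pt_lim_id.
   apply Y2d; auto.
   rewrite !mvec_plus, !mvec_neg. ring.
 - intros t a. apply (continuity_pt_plus (fun t => v1 t a) (fun t => v2 (T - t) a)). auto.
   apply (continuity_pt_comp (fun t => T - t) (fun s => v2 s a)).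
   apply continuity_pt_minus. apply continuity_pt_const. intros u w; auto. apply derivable_continuous_pt, derivable_pt_id. auto. Qed.

From Coquelicot Require Import Coquelicot.

Definition clamp (a b s : R) : R := Rmax a (Rmin b s).

Lemma clamp_in a b s : a <= b -> a <= clamp a b s <= b.
Proof. intros. unfold clamp, Rmax, Rmin. repeat destruct Rle_dec; lra. Qed.
Lemma clamp_id a b s : a <= s <= b -> clamp a b s = s.
Proof. intros. unfold clamp, Rmax, Rmin. repeat destruct Rle_dec; lra. Qed.
Lemma clamp_lip a b s u : a <= b -> Rabs (clamp a b s - clamp a b u) <= Rabs (s - u).
Proof. intros. unfold clamp, Rmax, Rmin. repeat destruct Rle_dec; unfold Rabs; repeat destruct Rcase_abs; lra. Qed.

Lemma cont_clamp a b f : a <= b -> cont_on a b f -> forall t, continuity_pt (fun s => f (clamp a b s)) t.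
Proof. intros Hab Hf t eps Heps.
 destruct (Hf (clamp a b t) (clamp_in a b t Hab) eps Heps) as [d [Hd H]].
 exists d; split; [lra|]. intros x [_ Hx]. simpl in *. unfold R_dist in *.
 apply H. apply clamp_in; auto. eapply Rle_lt_trans. apply clamp_lip; auto. auto. Qed.

Lemma cont_unclamp a b f : a <= b -> (forall t, a <= t <= b -> continuity_pt (fun s => f (clamp a b s)) t) -> cont_on a b f.
Proof. intros Hab H t Ht eps Heps.
 destruct (H t Ht eps Heps) as [d [Hd Hx]]. exists d; split; [lra|]. intros s Hs Hst.
 destruct (Req_dec s t). subst. replace (f t - f t) with 0 by ring. rewrite Rabs_R0; auto.
 assert (HH := Hx s). simpl in HH. unfold R_dist in HH. rewrite !clamp_id in HH by auto.
 apply HH. split; auto. split; auto. exact I. Qed.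

Lemma cont_on_of_cont a b f : (forall t, a <= t <= b -> continuity_pt f t) -> cont_on a b f.
Proof. intros H t Ht eps Heps. destruct (H t Ht eps Heps) as [d [Hd Hx]]. exists d; split; [lra|].
 intros s Hs Hst. destruct (Req_dec s t). subst. replace (f t - f t) with 0 by ring. rewrite Rabs_R0; auto.
 apply (Hx s). split; auto. split; auto. exact I. Qed.

Lemma cont_on_plus a b f g : a <= b -> cont_on a b f -> cont_on a b g -> cont_on a b (fun t => f t + g t).
Proof. intros Hab Hf Hg. apply cont_unclamp; auto. intros.
 apply (continuity_pt_plus (fun s => f (clamp a b s)) (fun s => g (clamp a b s))); apply cont_clamp; auto. Qed.
Lemma cont_on_minus a b f g : a <= b -> cont_on a b f -> cont_on a b g -> cont_on a b (fun t => f t - g t).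
Proof. intros Hab Hf Hg. apply cont_unclamp; auto. intros.
 apply (continuity_pt_minus (fun s => f (clamp a b s)) (fun s => g (clamp a b s))); apply cont_clamp; auto. Qed.
Lemma cont_on_mult a b f g : a <= b -> cont_on a b f -> cont_on a b g -> cont_on a b (fun t => f t * g t).
Proof. intros Hab Hf Hg. apply cont_unclamp; auto. intros.
 apply (continuity_pt_mult (fun s => f (clamp a b s)) (fun s => g (clamp a b s))); apply cont_clamp; auto. Qed.
Lemma cont_on_const a b c : cont_on a b (fun _ => c).
Proof. intros t Ht eps Heps. exists 1; split; [lra|]. intros. replace (c - c) with 0 by ring. rewrite Rabs_R0; auto. Qed.
Lemma cont_on_sumR a b k (f : nat -> R -> R) : a <= b -> (forall i, (i < k)%nat -> cont_on a b (f i)) ->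
  cont_on a b (fun t => sumR k (fun i => f i t)).
Proof. intros Hab H. induction k; simpl. apply cont_on_const.
 apply (cont_on_plus a b (fun t => sumR k (fun i => f i t)) (f k)); auto. Qed.
Lemma cont_on_sub a b a' b' f : a <= a' -> b' <= b -> cont_on a b f -> cont_on a' b' f.
Proof. intros H1 H2 Hf t Ht eps Heps. destruct (Hf t ltac:(lra) eps Heps) as [d [Hd H]]. exists d; split; auto.
 intros s Hs Hst; apply H; auto; lra. Qed.
Lemma cont_on_ext a b f g : (forall t, a <= t <= b -> f t = g t) -> cont_on a b f -> cont_on a b g.
Proof. intros E Hf t Ht eps Heps. destruct (Hf t Ht eps Heps) as [d [Hd H]]. exists d; split; auto.
 intros s Hs Hst. rewrite <- !E by auto. auto. Qed.

Lemma cont_on_bound a b f : a <= b -> cont_on a b f -> exists K, forall t, a <= t <= b -> Rabs (f t) <= K.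
Proof. intros Hab Hf.
 destruct (continuity_ab_maj (fun s => Rabs (f (clamp a b s))) a b Hab) as [Mx [HM _]].
 intros c Hc. apply (continuity_pt_comp (fun s => f (clamp a b s)) Rabs). apply cont_clamp; auto. apply Rcontinuity_abs.
 exists (Rabs (f (clamp a b Mx))). intros t Ht. specialize (HM t Ht). simpl in HM. rewrite clamp_id in HM; auto. Qed.

Lemma mono a b h h' : a < b -> cont_on a b h ->
  (forall t, a < t < b -> derivable_pt_lim h t (h' t)) -> (forall t, a < t < b -> 0 <= h' t) -> h a <= h b.
Proof. intros Hab Hc Hd Hp.
 set (df := fun t => if Rlt_dec a t then if Rlt_dec t b then h' t else 0 else 0).
 assert (Hdf : forall t, 0 <= df t). { intros. unfold df. repeat destruct Rlt_dec; try lra. apply Hp; lra. }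
 destruct (MVT_gen (fun s => h (clamp a b s)) a b df) as [c [Hc1 Hc2]].
 - intros x Hx. rewrite Rmin_left, Rmax_right in Hx by lra.
   unfold df. destruct Rlt_dec; [|lra]. destruct Rlt_dec; [|lra].
   apply is_derive_ext_loc with h.
   assert (He : 0 < Rmin (x - a) (b - x)) by (apply Rmin_pos; lra).
   exists (mkposreal _ He). intros y Hy. simpl in Hy. unfold ball in Hy; simpl in Hy. unfold AbsRing_ball, abs, minus, plus, opp in Hy; simpl in Hy.
   assert (Hm1 := Rmin_l (x - a) (b - x)). assert (Hm2 := Rmin_r (x - a) (b - x)).
   rewrite clamp_id; auto. unfold Rabs in Hy; destruct Rcase_abs in Hy; lra.
   apply is_derive_Reals. apply Hd; lra.
 - intros; apply cont_clamp; [lra|auto].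
 - rewrite !clamp_id in Hc2 by lra. assert (0 <= df c * (b - a)) by (apply Rmult_le_pos; auto; lra). lra.
Qed.

Lemma mono_dec a b h h' : a < b -> cont_on a b h ->
  (forall t, a < t < b -> derivable_pt_lim h t (h' t)) -> (forall t, a < t < b -> h' t <= 0) -> h b <= h a.
Proof. intros Hab Hc Hd Hp.
 assert (- h a <= - h b); [|lra].
 apply (mono a b (fun t => - h t) (fun t => - h' t)); auto.
 apply (cont_on_ext a b (fun t => 0 - h t)). intros; ring. apply cont_on_minus; try lra. apply cont_on_const. auto.
 intros. apply derivable_pt_lim_opp. auto. intros t Ht; specialize (Hp t Ht); lra. Qed.

Lemma prim_deriv F : (forall t, continuity_pt F t) -> forall a t, derivable_pt_lim (fun t => RInt F a t) t (F t).
Proof. intros HF a t. apply is_derive_Reals. apply (is_derive_RInt F (fun t => RInt F a t) a t).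
 exists (mkposreal 1 Rlt_0_1). intros y _. apply (RInt_correct (V := R_CompleteNormedModule)). apply (ex_RInt_continuous (V := R_CompleteNormedModule)).
 intros; apply continuity_pt_filterlim; auto. apply continuity_pt_filterlim; auto. Qed.

Lemma D_sumR' k (f : nat -> R -> R) (f' : nat -> R) t :
  (forall d, (d < k)%nat -> derivable_pt_lim (f d) t (f' d)) ->
  derivable_pt_lim (fun t => sumR k (fun d => f d t)) t (sumR k f').
Proof. induction k; intros H; simpl.
 apply derivable_pt_lim_const.
 apply (derivable_pt_lim_plus (fun t => sumR k (fun d => f d t)) (f k)).
 apply IHk; intros; apply H; lia. apply H; lia. Qed.

Lemma sumR_abs_le k f g : (forall i, (i < k)%nat -> Rabs (f i) <= g i) -> Rabs (sumR k f) <= sumR k g.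
Proof. intros H. eapply Rle_trans. apply sumR_abs. apply sumR_le. auto. Qed.

Lemma ab_le a b : Rabs a * Rabs b <= (a * a + b * b) / 2.
Proof. assert (0 <= (a - b) * (a - b)) by (apply Rle_0_sqr). assert (0 <= (a + b) * (a + b)) by (apply Rle_0_sqr).
 unfold Rabs; repeat destruct Rcase_abs; nra. Qed.

Definition sq2 n (D : mat) := sumR n (fun i => sumR n (fun j => D i j * D i j)).

Lemma sq2_nonneg n D : 0 <= sq2 n D.
Proof. apply sumR_nonneg; intros; apply sumR_nonneg; intros; nra. Qed.

Lemma tri_bound n (f : nat -> nat -> nat -> R) (c : nat -> nat -> nat -> R) :
  (forall i j k, (i < n)%nat -> (j < n)%nat -> (k < n)%nat -> Rabs (f i j k) <= c i j k) ->
  Rabs (sumR n (fun i => sumR n (fun j => sumR n (fun k => f i j k)))) <= sumR n (fun i => sumR n (fun j => sumR n (fun k => c i j k))).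
Proof. intros H. apply sumR_abs_le. intros i Hi. apply sumR_abs_le. intros j Hj. apply sumR_abs_le. intros k Hk. auto. Qed.

Lemma L1 n (D X : mat) K : 0 <= K -> (forall k j, (k < n)%nat -> (j < n)%nat -> Rabs (X k j) <= K) ->
  Rabs (sumR n (fun i => sumR n (fun j => D i j * sumR n (fun k => D i k * X k j)))) <= K * INR n * sq2 n D.
Proof. intros HK HX.
 rewrite (sumR_ext n _ (fun i => sumR n (fun j => sumR n (fun k => D i j * D i k * X k j)))).
 2:{ intros i Hi. apply sumR_ext. intros j Hj. rewrite <- sumR_scal. apply sumR_ext; intros; ring. }
 eapply Rle_trans. apply (tri_bound n _ (fun i j k => K / 2 * (D i j * D i j) + K / 2 * (D i k * D i k))).
 { intros i j k Hi Hj Hk. rewrite !Rabs_mult. assert (H1 := ab_le (D i j) (D i k)). assert (H2 := HX k j Hk Hj).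
   assert (0 <= Rabs (D i j) * Rabs (D i k)) by (apply Rmult_le_pos; apply Rabs_pos).
   assert (Rabs (D i j) * Rabs (D i k) * Rabs (X k j) <= Rabs (D i j) * Rabs (D i k) * K) by (apply Rmult_le_compat_l; auto). nra. }
 right. unfold sq2.
 rewrite (sumR_ext n _ (fun i => K / 2 * INR n * sumR n (fun j => D i j * D i j) + K / 2 * INR n * sumR n (fun k => D i k * D i k))).
 rewrite sumR_plus, !sumR_scal. field.
 intros i Hi. rewrite (sumR_ext n _ (fun j => K / 2 * INR n * (D i j * D i j) + K / 2 * sumR n (fun k => D i k * D i k))).
 rewrite sumR_plus, !sumR_scal, sumR_const. ring.
 intros j Hj. rewrite sumR_plus, sumR_const, sumR_scal. ring. Qed.

Lemma L2 n (D X : mat) K : 0 <= K -> (forall i k, (i < n)%nat -> (k < n)%nat -> Rabs (X i k) <= K) ->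
  Rabs (sumR n (fun i => sumR n (fun j => D i j * sumR n (fun k => X i k * D k j)))) <= K * INR n * sq2 n D.
Proof. intros HK HX.
 rewrite (sumR_ext n _ (fun i => sumR n (fun j => sumR n (fun k => D i j * X i k * D k j)))).
 2:{ intros i Hi. apply sumR_ext. intros j Hj. rewrite <- sumR_scal. apply sumR_ext; intros; ring. }
 eapply Rle_trans. apply (tri_bound n _ (fun i j k => K / 2 * (D i j * D i j) + K / 2 * (D k j * D k j))).
 { intros i j k Hi Hj Hk. rewrite !Rabs_mult. assert (H1 := ab_le (D i j) (D k j)). assert (H2 := HX i k Hi Hk).
   assert (0 <= Rabs (D i j) * Rabs (D k j)) by (apply Rmult_le_pos; apply Rabs_pos).
   assert (Rabs (D i j) * Rabs (D k j) * Rabs (X i k) <= Rabs (D i j) * Rabs (D k j) * K) by (apply Rmult_le_compat_l; auto). nra. }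
 right. unfold sq2.
 rewrite (sumR_ext n _ (fun i => K / 2 * INR n * sumR n (fun j => D i j * D i j) + K / 2 * sumR n (fun j => sumR n (fun k => D k j * D k j)))).
 rewrite sumR_plus, !sumR_scal, sumR_const. rewrite (sumR_swap n n (fun j k => D k j * D k j)). field.
 intros i Hi. rewrite (sumR_ext n _ (fun j => K / 2 * INR n * (D i j * D i j) + K / 2 * sumR n (fun k => D k j * D k j))).
 rewrite sumR_plus, !sumR_scal. ring.
 intros j Hj. rewrite sumR_plus, sumR_const, sumR_scal. ring. Qed.

Lemma bound_mmul p X Y K1 K2 a b : 0 <= K1 -> (forall c, (c < p)%nat -> Rabs (X a c) <= K1) -> (forall c, (c < p)%nat -> Rabs (Y c b) <= K2) ->
  Rabs (mmul p X Y a b) <= INR p * K1 * K2.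
Proof. intros HK1 HX HY. unfold mmul. eapply Rle_trans. apply sumR_abs.
 replace (INR p * K1 * K2) with (sumR p (fun _ => K1 * K2)) by (rewrite sumR_const; ring). apply sumR_le. intros c Hc. rewrite Rabs_mult.
 assert (H1 := HX c Hc); assert (H2 := HY c Hc). assert (0 <= Rabs (Y c b)) by apply Rabs_pos.
 apply Rmult_le_compat; auto; apply Rabs_pos. Qed.

Lemma fin_bound k (P : nat -> R -> Prop) : (forall i K K', P i K -> K <= K' -> P i K') ->
  (forall i, (i < k)%nat -> exists K, P i K) -> exists K, 0 <= K /\ forall i, (i < k)%nat -> P i K.
Proof. intros Hmono H. induction k.
 exists 0. split; [lra|]. intros; lia.
 destruct IHk as [K1 [HK1 H1]]. intros; apply H; lia.
 destruct (H k) as [K2 H2]. lia.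
 exists (Rmax K1 K2). split. eapply Rle_trans; [apply HK1| apply Rmax_l].
 intros i Hi. destruct (Nat.eq_dec i k). subst. eapply Hmono; eauto; apply Rmax_r.
 eapply Hmono. apply H1; lia. apply Rmax_l. Qed.

Lemma const_bound n m (X : mat) : exists K, 0 <= K /\ forall i j, (i < n)%nat -> (j < m)%nat -> Rabs (X i j) <= K.
Proof. exists (sumR n (fun i => sumR m (fun j => Rabs (X i j)))). split.
 apply sumR_nonneg; intros; apply sumR_nonneg; intros; apply Rabs_pos.
 intros i j Hi Hj. eapply Rle_trans; [|apply (sumR_ge_term n _ i)].
 apply (sumR_ge_term m (fun j => Rabs (X i j)) j). intros; apply Rabs_pos. auto.
 intros; apply sumR_nonneg; intros; apply Rabs_pos. auto. Qed.

Definition ricf n m (A B : mat) (q r : R) (G : mat) : mat := fun i j =>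
  / r * mmul n (mmul m (mmul n G B) (trm B)) G i j - mmul n G A i j - mmul n (trm A) G i j - q * idm i j.

Definition Dm (G : mat) : mat := fun i j => G i j - G j i.

Lemma idm_sym i j : idm i j = idm j i.
Proof. unfold idm. rewrite Nat.eqb_sym. auto. Qed.

Lemma S2_swap n (f : nat -> nat -> R) : sumR n (fun k => sumR n (fun l => f k l)) = sumR n (fun k => sumR n (fun l => f l k)).
Proof. apply sumR_swap. Qed.

Lemma ric_diff n m A B q r G i j : 
  ricf n m A B q r G i j - ricf n m A B q r G j i =
  / r * (sumR n (fun k => Dm G i k * mmul n (mmul m B (trm B)) G k j) + sumR n (fun k => mmul n (trm G) (mmul m B (trm B)) i k * Dm G k j))
  - sumR n (fun k => Dm G i k * A k j) - sumR n (fun k => trm A i k * Dm G k j).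
Proof.
 set (E := mmul m B (trm B)).
 assert (Es : forall k l, E k l = E l k). { intros. unfold E, mmul, trm. apply sumR_ext; intros; ring. }
 assert (HQ : forall a b, mmul n (mmul m (mmul n G B) (trm B)) G a b = sumR n (fun k => sumR n (fun l => G a l * E l k * G k b))).
 { intros. unfold mmul at 1. apply sumR_ext. intros k Hk. rewrite mmul_assoc. fold E. unfold mmul. rewrite <- sumR_scalr. auto. }
 assert (HX1 : sumR n (fun k => Dm G i k * mmul n E G k j) = sumR n (fun k => sumR n (fun l => (G i l - G l i) * E l k * G k j))).
 { rewrite S2_swap. apply sumR_ext; intros k Hk. unfold mmul. rewrite <- sumR_scal. apply sumR_ext; intros. unfold Dm. ring. }
 assert (HX2 : sumR n (fun k => mmul n (trm G) E i k * Dm G k j) = sumR n (fun k => sumR n (fun l => G l i * E l k * (G k j - G j k)))).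
 { apply sumR_ext; intros k Hk. unfold mmul, trm. rewrite <- sumR_scalr. apply sumR_ext; intros. unfold Dm. ring. }
 assert (HQ2 : sumR n (fun k => sumR n (fun l => G j l * E l k * G k i)) = sumR n (fun k => sumR n (fun l => G l i * E l k * G j k))).
 { rewrite S2_swap. apply sumR_ext; intros k Hk. apply sumR_ext; intros l Hl. rewrite Es. ring. }
 unfold ricf. rewrite !HQ. fold E. rewrite HX1, HX2, HQ2. rewrite (idm_sym j i).
 assert (HL1 : mmul n G A i j - mmul n (trm A) G j i = sumR n (fun k => Dm G i k * A k j)).
 { unfold mmul, trm, Dm. rewrite <- sumR_minus. apply sumR_ext; intros; ring. }
 assert (HL2 : mmul n (trm A) G i j - mmul n G A j i = sumR n (fun k => trm A i k * Dm G k j)).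
 { unfold mmul, trm, Dm. rewrite <- sumR_minus. apply sumR_ext; intros; ring. }
 rewrite <- HL1, <- HL2.
 assert (HS : sumR n (fun k => sumR n (fun l => G i l * E l k * G k j)) - sumR n (fun k => sumR n (fun l => G l i * E l k * G j k))
   = sumR n (fun k => sumR n (fun l => (G i l - G l i) * E l k * G k j)) + sumR n (fun k => sumR n (fun l => G l i * E l k * (G k j - G j k)))).
 { rewrite <- sumR_minus, <- sumR_plus. apply sumR_ext; intros k Hk. rewrite <- sumR_minus, <- sumR_plus. apply sumR_ext; intros; ring. }
 rewrite <- HS. ring.
Qed.

Lemma abs_bt x y : Rabs x <= y -> - y <= x <= y.
Proof. unfold Rabs; destruct Rcase_abs; intros; lra. Qed.

Lemma D_expc c s : derivable_pt_lim (fun s => exp (c * s)) s (c * exp (c * s)).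
Proof. replace (c * exp (c * s)) with (exp (c * s) * c) by ring.
 apply (derivable_pt_lim_comp (fun s => c * s) exp). 
 assert (H := derivable_pt_lim_scal id c s 1 (derivable_pt_lim_id s)). rewrite Rmult_1_r in H. exact H.
 apply derivable_pt_lim_exp. Qed.

Lemma gamma_sym n m A B q r T M G : 0 < T -> 0 < r -> riccati_sol n m A B q r T M G ->
  forall t, 0 <= t <= T -> forall i j, (i < n)%nat -> (j < n)%nat -> G t i j = G t j i.
Proof.
 intros HT Hr Hric.
 assert (Hc : forall i j, (i < n)%nat -> (j < n)%nat -> cont_on 0 T (fun t => G t i j)) by (intros; apply (Hric i j); auto).
 assert (Hd : forall i j, (i < n)%nat -> (j < n)%nat -> forall t, 0 < t < T ->
    derivable_pt_lim (fun t => G t i j) t (ricf n m A B q r (G t) i j)) by (intros; apply (Hric i j); auto).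
 assert (HKG : exists KG, 0 <= KG /\ forall i, (i < n)%nat -> (fun i K => forall j, (j < n)%nat -> forall t, 0 <= t <= T -> Rabs (G t i j) <= K) i KG).
 { apply fin_bound. intros i0 K K' H HK j Hj t Ht. eapply Rle_trans; eauto.
   intros i Hi. destruct (fin_bound n (fun j K => forall t, 0 <= t <= T -> Rabs (G t i j) <= K)) as [K [_ HK]].
   intros j0 K K' H HK t Ht; eapply Rle_trans; eauto.
   intros j Hj. apply cont_on_bound; [lra|]. auto.
   exists K. auto. }
 destruct HKG as [KG [HKG0 HKG]]. simpl in HKG.
 destruct (const_bound n n (mmul m B (trm B))) as [KE [HKE0 HKE]].
 destruct (const_bound n n A) as [Ka [HKa0 HKa]].
 set (K1 := INR n * KE * KG). set (K2 := INR n * KG * KE).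
 assert (HK1 : 0 <= K1) by (unfold K1; repeat apply Rmult_le_pos; auto; apply pos_INR).
 assert (HK2 : 0 <= K2) by (unfold K2; repeat apply Rmult_le_pos; auto; apply pos_INR).
 set (c := 2 * (/ r * (K1 + K2) + 2 * Ka) * INR n).
 set (phi := fun t => sq2 n (Dm (G t))).
 set (phid := fun t => sumR n (fun i => sumR n (fun j =>
     (ricf n m A B q r (G t) i j - ricf n m A B q r (G t) j i) * Dm (G t) i j + Dm (G t) i j * (ricf n m A B q r (G t) i j - ricf n m A B q r (G t) j i)))).
 assert (Hphid : forall t, 0 < t < T -> derivable_pt_lim phi t (phid t)).
 { intros t Ht. unfold phi, phid, sq2.
   apply (D_sumR' n (fun i t => sumR n (fun j => Dm (G t) i j * Dm (G t) i j))). intros i Hi.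
   apply (D_sumR' n (fun j t => Dm (G t) i j * Dm (G t) i j)). intros j Hj.
   apply (derivable_pt_lim_mult (fun t => Dm (G t) i j) (fun t => Dm (G t) i j));
   unfold Dm; apply (derivable_pt_lim_minus (fun t => G t i j) (fun t => G t j i)); apply Hd; auto. }
 assert (Hphic : cont_on 0 T phi).
 { unfold phi, sq2. apply (cont_on_sumR 0 T n (fun i t => sumR n (fun j => Dm (G t) i j * Dm (G t) i j))). lra. intros i Hi.
   apply (cont_on_sumR 0 T n (fun j t => Dm (G t) i j * Dm (G t) i j)). lra. intros j Hj.
   unfold Dm. apply (cont_on_mult 0 T (fun t => G t i j - G t j i) (fun t => G t i j - G t j i)); try lra;
   apply (cont_on_minus 0 T (fun t => G t i j) (fun t => G t j i)); try lra; auto. }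
 assert (Hineq : forall t, 0 < t < T -> - c * phi t <= phid t).
 { intros t Ht. set (D := Dm (G t)).
   assert (Ex : phid t = 2 * / r * sumR n (fun i => sumR n (fun j => D i j * sumR n (fun k => D i k * mmul n (mmul m B (trm B)) (G t) k j)))
        + 2 * / r * sumR n (fun i => sumR n (fun j => D i j * sumR n (fun k => mmul n (trm (G t)) (mmul m B (trm B)) i k * D k j)))
        - 2 * sumR n (fun i => sumR n (fun j => D i j * sumR n (fun k => D i k * A k j)))
        - 2 * sumR n (fun i => sumR n (fun j => D i j * sumR n (fun k => trm A i k * D k j)))).
   { unfold phid. rewrite <- !sumR_scal, <- !sumR_plus, <- !sumR_minus. apply sumR_ext; intros i Hi.
     rewrite <- !sumR_scal, <- !sumR_plus, <- !sumR_minus. apply sumR_ext; intros j Hj.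
     rewrite ric_diff. fold D. ring. }
   assert (B1 := L1 n D (mmul n (mmul m B (trm B)) (G t)) K1 HK1).
   assert (B2 := L2 n D (mmul n (trm (G t)) (mmul m B (trm B))) K2 HK2).
   assert (B3 := L1 n D A Ka HKa0).
   assert (B4 := L2 n D (trm A) Ka HKa0).
   assert (T1 : Rabs (sumR n (fun i => sumR n (fun j => D i j * sumR n (fun k => D i k * mmul n (mmul m B (trm B)) (G t) k j)))) <= K1 * INR n * sq2 n D).
   { apply B1. intros k j Hk Hj. unfold K1. apply bound_mmul; auto. intros. apply HKG; auto; lra. }
   assert (T2 : Rabs (sumR n (fun i => sumR n (fun j => D i j * sumR n (fun k => mmul n (trm (G t)) (mmul m B (trm B)) i k * D k j)))) <= K2 * INR n * sq2 n D).
   { apply B2. intros k j Hk Hj. unfold K2. apply bound_mmul; auto. intros. unfold trm. apply HKG; auto; lra. }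
   assert (T3 : Rabs (sumR n (fun i => sumR n (fun j => D i j * sumR n (fun k => D i k * A k j)))) <= Ka * INR n * sq2 n D).
   { apply B3. auto. }
   assert (T4 : Rabs (sumR n (fun i => sumR n (fun j => D i j * sumR n (fun k => trm A i k * D k j)))) <= Ka * INR n * sq2 n D).
   { apply B4. intros; unfold trm; auto. }
   rewrite Ex. fold (phi t). unfold phi. fold D.
   revert T1 T2 T3 T4.
   generalize (sumR n (fun i => sumR n (fun j => D i j * sumR n (fun k => D i k * mmul n (mmul m B (trm B)) (G t) k j)))) as t1.
   generalize (sumR n (fun i => sumR n (fun j => D i j * sumR n (fun k => mmul n (trm (G t)) (mmul m B (trm B)) i k * D k j)))) as t2.
   generalize (sumR n (fun i => sumR n (fun j => D i j * sumR n (fun k => D i k * A k j)))) as t3.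
   generalize (sumR n (fun i => sumR n (fun j => D i j * sumR n (fun k => trm A i k * D k j)))) as t4.
   intros t4 t3 t2 t1 T1 T2 T3 T4.
   assert (Hri : 0 < / r) by (apply Rinv_0_lt_compat; auto).
   apply abs_bt in T1; apply abs_bt in T2; apply abs_bt in T3; apply abs_bt in T4. unfold c.
   set (s := sq2 n D) in *. set (nn := INR n) in *.
   assert (0 <= s) by apply sq2_nonneg.
   assert (0 <= nn) by apply pos_INR.
   assert (E1 : / r * (- (K1 * nn * s)) <= / r * t1) by (apply Rmult_le_compat_l; lra).
   assert (E2 : / r * (- (K2 * nn * s)) <= / r * t2) by (apply Rmult_le_compat_l; lra).
   lra. }
 (* Gronwall *)
 set (psi := fun t => exp (c * t) * phi t).
 assert (HphiT : phi T = 0).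
 { unfold phi, sq2. apply sumR_zero; intros i Hi. apply sumR_zero; intros j Hj. unfold Dm.
   rewrite !(proj2 (Hric _ _ Hi Hj)), (proj2 (Hric _ _ Hj Hi)), idm_sym. ring. }
 assert (Hphi0 : forall t, 0 <= t <= T -> phi t = 0).
 { intros t Ht. destruct (Req_dec t T). subst; auto.
   assert (Hle : psi t <= psi T).
   { apply (mono t T psi (fun s => exp (c * s) * c * phi s + exp (c * s) * phid s)). lra.
     - unfold psi. apply (cont_on_mult t T (fun s => exp (c * s)) phi). lra.
       apply cont_on_of_cont. intros. apply derivable_continuous_pt. exists (c * exp (c * t0)). apply D_expc.
       apply (cont_on_sub 0 T); auto; lra.
     - intros s Hs. unfold psi. apply (derivable_pt_lim_mult (fun s => exp (c * s)) phi).
       replace (exp (c * s) * c) with (c * exp (c * s)) by ring. apply D_expc. apply Hphid; lra.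
     - intros s Hs. assert (HH := Hineq s ltac:(lra)). assert (0 < exp (c * s)) by apply exp_pos.
       replace (exp (c * s) * c * phi s + exp (c * s) * phid s) with (exp (c * s) * (c * phi s + phid s)) by ring.
       apply Rmult_le_pos; lra. }
   unfold psi in Hle. rewrite HphiT, Rmult_0_r in Hle.
   assert (0 < exp (c * t)) by apply exp_pos. assert (0 <= phi t) by apply sq2_nonneg.
   assert (phi t <= 0). { apply (Rmult_le_reg_l (exp (c * t))); auto. lra. } lra. }
 intros t Ht i j Hi Hj. specialize (Hphi0 t Ht). unfold phi, sq2 in Hphi0.
 assert (H1 := sumR_zero_nonneg n _ (fun i Hi => sumR_nonneg n _ (fun j Hj => Rle_0_sqr (Dm (G t) i j))) Hphi0 i Hi).
 simpl in H1.
 assert (H2 := sumR_zero_nonneg n _ (fun j Hj => Rle_0_sqr (Dm (G t) i j)) H1 j Hj). simpl in H2.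
 unfold Dm in H2. unfold Rsqr in H2. apply Rmult_integral in H2. destruct H2; lra.
Qed.

Lemma dot_mvec_sym n (G : mat) u v : (forall i j, (i < n)%nat -> (j < n)%nat -> G i j = G j i) ->
  dot n u (mvec n G v) = dot n (mvec n G u) v.
Proof. intros Hs. rewrite dot_mvec. apply dot_ext; auto. intros i Hi. unfold mvec, trm. apply sumR_ext; intros. rewrite Hs; auto. Qed.

Lemma mvec_trm2 p (X : mat) u i : mvec p (trm (trm X)) u i = mvec p X u i.
Proof. reflexivity. Qed.

Lemma dot_idm n y q : dot n y (mvec n (fun i j => q * idm i j) y) = q * dot n y y.
Proof. rewrite <- dot_scal_r. apply dot_ext; auto. intros i Hi. unfold mvec.
 rewrite (sumR_single n i). unfold idm; rewrite Nat.eqb_refl; ring. auto.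
 intros. unfold idm. destruct (Nat.eqb_spec i0 i); [lia|]. destruct (Nat.eqb_spec i i0); [lia| ring]. Qed.

Lemma mvec_ext_mat k X Y v i : (forall c, (c < k)%nat -> X i c = Y i c) -> mvec k X v i = mvec k Y v i.
Proof. intros; unfold mvec; apply sumR_ext; intros; rewrite H; auto. Qed.

Lemma mvec_idm_local n u i : (i < n)%nat -> mvec n idm u i = u i.
Proof. intros. unfold mvec. rewrite (sumR_single n i). unfold idm. rewrite Nat.eqb_refl. ring. auto.
 intros. unfold idm. destruct (Nat.eqb_spec i i0); [lia| ring]. Qed.

Lemma sq_identity n m A B q r (G Gd : mat) (b bd xh y yd v : vec) dd : r <> 0 ->
  (forall i j, (i < n)%nat -> (j < n)%nat -> G i j = G j i) ->
  (forall i j, (i < n)%nat -> (j < n)%nat -> Gd i j = ricf n m A B q r G i j) ->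
  (forall i, (i < n)%nat -> bd i = / r * mvec n (mmul m (mmul n G B) (trm B)) b i - mvec n (trm A) b i + q * xh i) ->
  dd = / (2 * r) * dot m (mvec n (trm B) b) (mvec n (trm B) b) - q / 2 * dot n xh xh ->
  (forall i, (i < n)%nat -> yd i = mvec n A y i + mvec m B v i) ->
  / 2 * (dot n yd (mvec n G y) + dot n y (fun i => mvec n Gd y i + mvec n G yd i)) + (dot n bd y + dot n b yd) + dd
  = r / 2 * dot m (fun a => v a + / r * mvec n (trm B) (fun i => mvec n G y i + b i) a)
                  (fun a => v a + / r * mvec n (trm B) (fun i => mvec n G y i + b i) a)
    - r / 2 * dot m v v - q / 2 * dot n (fun i => y i - xh i) (fun i => y i - xh i).
Proof.
 intros Hr Hs HGd Hbd Hdd Hyd.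
 set (Gy := mvec n G y). set (Ay := mvec n A y). set (Bv := mvec m B v).
 set (wy := mvec n (trm B) Gy). set (wb := mvec n (trm B) b).
 assert (Hw : forall a, mvec n (trm B) (fun i => mvec n G y i + b i) a = wy a + wb a) by (intros; apply mvec_plus).
 assert (E1 : dot n yd Gy = dot n Ay Gy + dot n Bv Gy).
 { rewrite <- dot_plus_l. apply dot_ext; auto. }
 assert (E2 : dot n y (fun i => mvec n Gd y i + mvec n G yd i) = dot n y (mvec n Gd y) + (dot n Ay Gy + dot n Bv Gy)).
 { rewrite dot_plus_r. f_equal. rewrite dot_mvec_sym by auto. fold Gy. rewrite dot_comm. auto. }
 assert (HQ : forall u i, mvec n (mmul m (mmul n G B) (trm B)) u i = mvec n G (mvec m B (mvec n (trm B) u)) i).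
 { intros. rewrite mvec_mmul, mvec_mmul. auto. }
 assert (E3 : dot n y (mvec n Gd y) = / r * dot m wy wy - 2 * dot n Ay Gy - q * dot n y y).
 { rewrite (dot_ext n y y _ (fun i => / r * mvec n G (mvec m B wy) i - mvec n G Ay i - mvec n (trm A) Gy i - q * mvec n idm y i)); auto.
   2:{ intros i Hi. rewrite (mvec_ext_mat n Gd (ricf n m A B q r G)) by (intros; apply HGd; auto).
       unfold ricf. unfold mvec at 1. 
       rewrite (sumR_ext n _ (fun c => / r * (mmul n (mmul m (mmul n G B) (trm B)) G i c * y c) - mmul n G A i c * y c - mmul n (trm A) G i c * y c - q * (idm i c * y c))) by (intros; ring).
       rewrite !sumR_minus, !sumR_scal. fold (mvec n (mmul n (mmul m (mmul n G B) (trm B)) G) y i).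
       fold (mvec n (mmul n G A) y i). fold (mvec n (mmul n (trm A) G) y i). fold (mvec n idm y i).
       rewrite !mvec_mmul. fold Gy. fold Ay. fold wy. auto. }
   rewrite !dot_minus_r, !dot_scal_r.
   rewrite (dot_mvec_sym n G y) by auto. fold Gy. rewrite dot_mvec. fold wy.
   assert (Ea : dot n y (mvec n G Ay) = dot n Ay Gy) by (rewrite dot_mvec_sym by auto; apply dot_comm).
   assert (Eb : dot n y (mvec n (trm A) Gy) = dot n Ay Gy) by (rewrite dot_mvec; apply dot_ext; auto; intros; apply mvec_trm2).
   assert (Ec : dot n y (mvec n idm y) = dot n y y) by (apply dot_ext; auto; intros; apply mvec_idm_local; auto).
   rewrite Ea, Eb, Ec. ring. }
 assert (E4 : dot n bd y = / r * dot m wy wb - dot n b Ay + q * dot n xh y).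
 { rewrite (dot_ext n bd (fun i => / r * mvec n G (mvec m B wb) i - mvec n (trm A) b i + q * xh i) y y) by (auto; intros; rewrite Hbd, HQ; auto).
   rewrite dot_plus_l, dot_minus_l, !dot_scal_l.
   assert (Ea : dot n (mvec n G (mvec m B wb)) y = dot m wy wb).
   { rewrite dot_comm, (dot_mvec_sym n G y) by auto. fold Gy. rewrite dot_mvec. fold wy. auto. }
   assert (Eb : dot n (mvec n (trm A) b) y = dot n b Ay).
   { rewrite dot_comm, dot_mvec, dot_comm. apply dot_ext; auto. }
   rewrite Ea, Eb. ring. }
 assert (E5 : dot n b yd = dot n b Ay + dot n b Bv).
 { rewrite <- dot_plus_r. apply dot_ext; auto. }
 assert (E6 : dot n Bv Gy = dot m v wy). { unfold Bv. rewrite dot_comm, dot_mvec. fold wy. apply dot_comm. }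
 assert (E7 : dot n b Bv = dot m v wb). { unfold Bv. rewrite dot_mvec. fold wb. apply dot_comm. }
 assert (E10 : forall a, mvec n (trm B) (fun i => Gy i + b i) a = wy a + wb a) by (intros; apply mvec_plus).
 rewrite (dot_ext m (fun a => v a + / r * mvec n (trm B) (fun i => Gy i + b i) a) (fun a => v a + / r * (wy a + wb a))
    (fun a => v a + / r * mvec n (trm B) (fun i => Gy i + b i) a) (fun a => v a + / r * (wy a + wb a))) by (intros; rewrite E10; auto).
 assert (E8 : dot m (fun a => v a + / r * (wy a + wb a)) (fun a => v a + / r * (wy a + wb a))
   = dot m v v + 2 * / r * (dot m v wy + dot m v wb) + / r * / r * (dot m wy wy + 2 * dot m wy wb + dot m wb wb)).
 { rewrite !dot_plus_l, !dot_plus_r. rewrite !dot_scal_l, !dot_scal_r, !dot_plus_l, !dot_plus_r.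
   rewrite (dot_comm m wy v), (dot_comm m wb v), (dot_comm m wb wy). ring. }
 assert (E9 : dot n (fun i => y i - xh i) (fun i => y i - xh i) = dot n y y - 2 * dot n xh y + dot n xh xh).
 { rewrite !dot_minus_l, !dot_minus_r. rewrite (dot_comm n y xh). ring. }
 fold Gy. rewrite E8, E9, E1, E2, E3, E4, E5, E6, E7, Hdd. fold wb. field. auto.
Qed.

Definition Vfun n (G : mat) (b : vec) (d : R) (y : vec) : R := / 2 * dot n y (mvec n G y) + dot n b y + d.

Lemma D_dot n (u v : R -> vec) u' v' t :
  (forall i, (i < n)%nat -> derivable_pt_lim (fun t => u t i) t (u' i)) ->
  (forall i, (i < n)%nat -> derivable_pt_lim (fun t => v t i) t (v' i)) ->
  derivable_pt_lim (fun t => dot n (u t) (v t)) t (dot n u' (v t) + dot n (u t) v').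
Proof. intros Hu Hv. unfold dot. rewrite <- sumR_plus.
 apply (D_sumR' n (fun i t => u t i * v t i)). intros i Hi.
 apply (derivable_pt_lim_mult (fun t => u t i) (fun t => v t i)); auto. Qed.

Lemma D_mvec n (G : R -> mat) (y : R -> vec) Gd yd t i :
  (forall c, (c < n)%nat -> derivable_pt_lim (fun t => G t i c) t (Gd i c)) ->
  (forall c, (c < n)%nat -> derivable_pt_lim (fun t => y t c) t (yd c)) ->
  derivable_pt_lim (fun t => mvec n (G t) (y t) i) t (mvec n Gd (y t) i + mvec n (G t) yd i).
Proof. intros HG Hy. unfold mvec. rewrite <- sumR_plus.
 apply (D_sumR' n (fun c t => G t i c * y t c)). intros c Hc.
 apply (derivable_pt_lim_mult (fun t => G t i c) (fun t => y t c)); auto. Qed.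

Lemma D_Vfun n (G : R -> mat) (b y : R -> vec) (d : R -> R) Gd bd dd yd t :
  (forall i c, (i < n)%nat -> (c < n)%nat -> derivable_pt_lim (fun t => G t i c) t (Gd i c)) ->
  (forall i, (i < n)%nat -> derivable_pt_lim (fun t => b t i) t (bd i)) ->
  derivable_pt_lim d t dd ->
  (forall i, (i < n)%nat -> derivable_pt_lim (fun t => y t i) t (yd i)) ->
  derivable_pt_lim (fun t => Vfun n (G t) (b t) (d t) (y t)) t
    (/ 2 * (dot n yd (mvec n (G t) (y t)) + dot n (y t) (fun i => mvec n Gd (y t) i + mvec n (G t) yd i)) + (dot n bd (y t) + dot n (b t) yd) + dd).
Proof. intros HG Hb Hd Hy. unfold Vfun.
 apply (derivable_pt_lim_plus (fun t => / 2 * dot n (y t) (mvec n (G t) (y t)) + dot n (b t) (y t)) d); auto.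
 apply (derivable_pt_lim_plus (fun t => / 2 * dot n (y t) (mvec n (G t) (y t))) (fun t => dot n (b t) (y t))).
 apply (derivable_pt_lim_scal (fun t => dot n (y t) (mvec n (G t) (y t)))).
 apply (D_dot n y (fun t => mvec n (G t) (y t))); auto. intros i Hi. apply D_mvec; auto.
 apply D_dot; auto. Qed.

Lemma cont_on_dot n (u v : R -> vec) a b : a <= b ->
  (forall i, (i < n)%nat -> cont_on a b (fun t => u t i)) -> (forall i, (i < n)%nat -> cont_on a b (fun t => v t i)) ->
  cont_on a b (fun t => dot n (u t) (v t)).
Proof. intros Hab Hu Hv. unfold dot. apply (cont_on_sumR a b n (fun i t => u t i * v t i)); auto.
 intros i Hi. apply (cont_on_mult a b (fun t => u t i) (fun t => v t i)); auto. Qed.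

Lemma cont_on_mvec n (G : R -> mat) (y : R -> vec) a b i : a <= b ->
  (forall c, (c < n)%nat -> cont_on a b (fun t => G t i c)) -> (forall c, (c < n)%nat -> cont_on a b (fun t => y t c)) ->
  cont_on a b (fun t => mvec n (G t) (y t) i).
Proof. intros Hab Hu Hv. unfold mvec. apply (cont_on_sumR a b n (fun c t => G t i c * y t c)); auto.
 intros c Hc. apply (cont_on_mult a b (fun t => G t i c) (fun t => y t c)); auto. Qed.

Lemma cont_on_Vfun n (G : R -> mat) (b y : R -> vec) (d : R -> R) a c : a <= c ->
  (forall i j, (i < n)%nat -> (j < n)%nat -> cont_on a c (fun t => G t i j)) ->
  (forall i, (i < n)%nat -> cont_on a c (fun t => b t i)) -> cont_on a c d ->
  (forall i, (i < n)%nat -> cont_on a c (fun t => y t i)) ->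
  cont_on a c (fun t => Vfun n (G t) (b t) (d t) (y t)).
Proof. intros Hac HG Hb Hd Hy. unfold Vfun.
 apply (cont_on_plus a c (fun t => / 2 * dot n (y t) (mvec n (G t) (y t)) + dot n (b t) (y t)) d); auto.
 apply (cont_on_plus a c (fun t => / 2 * dot n (y t) (mvec n (G t) (y t))) (fun t => dot n (b t) (y t))); auto.
 apply (cont_on_mult a c (fun _ => / 2) (fun t => dot n (y t) (mvec n (G t) (y t)))); auto. apply cont_on_const.
 apply cont_on_dot; auto. intros; apply cont_on_mvec; auto.
 apply cont_on_dot; auto. Qed.

Lemma V_at_T n M (G : mat) (b : vec) d (p y : vec) :
  (forall i j, (i < n)%nat -> (j < n)%nat -> G i j = M * idm i j) ->
  (forall i, (i < n)%nat -> b i = - M * p i) -> d = M / 2 * dot n p p ->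
  Vfun n G b d y = M / 2 * dot n (fun c => y c - p c) (fun c => y c - p c).
Proof. intros HG Hb Hd. unfold Vfun. rewrite Hd.
 rewrite (dot_ext n y y (mvec n G y) (fun i => M * y i)); auto.
 2:{ intros i Hi. unfold mvec. rewrite (sumR_single n i). rewrite HG by auto. unfold idm. rewrite Nat.eqb_refl. ring. auto.
     intros c Hc Hne. rewrite HG by auto. unfold idm. destruct (Nat.eqb_spec i c); [lia| ring]. }
 rewrite (dot_ext n b (fun i => - M * p i) y y); auto.
 rewrite !dot_scal_r, !dot_scal_l, !dot_minus_l, !dot_minus_r. rewrite (dot_comm n y p). field. Qed.

Lemma dot_sq_nonneg n u : 0 <= dot n u u.
Proof. apply sumR_nonneg. intros. apply Rle_0_sqr. Qed.

Lemma dot_diff_le n u w : dot n (fun i => u i - w i) (fun i => u i - w i) <= 2 * dot n u u + 2 * dot n w w.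
Proof. unfold dot. rewrite <- !sumR_scal, <- sumR_plus. apply sumR_le. intros. 
 assert (0 <= (u i + w i) * (u i + w i)) by apply Rle_0_sqr. nra. Qed.

Lemma Vfun_ext n G b d y y' : (forall i, (i < n)%nat -> y i = y' i) -> Vfun n G b d y = Vfun n G b d y'.
Proof. intros H. unfold Vfun. rewrite (dot_ext n y y' (mvec n G y) (mvec n G y')); auto.
 rewrite (dot_ext n b b y y'); auto. intros; apply mvec_ext; auto. Qed.

Lemma cont_pt_dot n (u v : R -> vec) t :
  (forall i, (i < n)%nat -> continuity_pt (fun t => u t i) t) -> (forall i, (i < n)%nat -> continuity_pt (fun t => v t i) t) ->
  continuity_pt (fun t => dot n (u t) (v t)) t.
Proof. intros Hu Hv. unfold dot. induction n; simpl. apply continuity_pt_const. intros a b; auto.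
 apply (continuity_pt_plus (fun t => sumR n (fun i => u t i * v t i)) (fun t => u t n * v t n)).
 apply IHn; intros; [apply Hu| apply Hv]; lia.
 apply (continuity_pt_mult (fun t => u t n) (fun t => v t n)); [apply Hu| apply Hv]; lia. Qed.

Lemma dot_zero n u : (forall i, (i < n)%nat -> u i = 0) -> dot n u u = 0.
Proof. intros H. unfold dot. apply sumR_zero. intros. rewrite H; auto; ring. Qed.

Lemma closed_loop n m A B q r T M G b d xh pk x0 x : 0 < q -> 0 < r -> 0 < T ->
  riccati_sol n m A B q r T M G -> beta_sol n m A B q r T M G xh pk b -> delta_sol n m B q r T M xh pk b d ->
  agent_traj n m A B r T G b x0 x ->
  Vfun n (G T) (b T) (d T) (x T) <= Vfun n (G 0) (b 0) (d 0) (x 0).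
Proof. intros Hq Hr HT Hric Hb Hd Hx.
 set (v := fun t a => - / r * mvec n (trm B) (fun c => mvec n (G t) (x t) c + b t c) a).
 apply (mono_dec 0 T (fun t => Vfun n (G t) (b t) (d t) (x t))
   (fun t => r / 2 * dot m (fun a => v t a + / r * mvec n (trm B) (fun i => mvec n (G t) (x t) i + b t i) a)
                  (fun a => v t a + / r * mvec n (trm B) (fun i => mvec n (G t) (x t) i + b t i) a)
    - r / 2 * dot m (v t) (v t) - q / 2 * dot n (fun i => x t i - xh t i) (fun i => x t i - xh t i))); auto.
 - apply cont_on_Vfun; try lra. intros; apply (Hric i j); auto. intros; apply (Hb i); auto. apply Hd.
   intros; apply (Hx i); auto.
 - intros t Ht. eapply D_eq. apply (D_Vfun n G b x d (ricf n m A B q r (G t))).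
   + intros i c Hi Hc. apply (Hric i c Hi Hc); auto.
   + intros i Hi. apply (Hb i Hi); auto.
   + apply Hd; auto.
   + intros i Hi. apply (Hx i Hi); auto.
   + apply (sq_identity n m A B q r); try lra; auto.
     * intros; apply (gamma_sym n m A B q r T M G); auto; lra.
 - intros t Ht. rewrite dot_zero. 
   assert (0 <= dot m (v t) (v t)) by apply dot_sq_nonneg.
   assert (0 <= dot n (fun i => x t i - xh t i) (fun i => x t i - xh t i)) by apply dot_sq_nonneg.
   assert (0 <= r / 2 * dot m (v t) (v t)) by (apply Rmult_le_pos; lra).
   assert (0 <= q / 2 * dot n (fun i => x t i - xh t i) (fun i => x t i - xh t i)) by (apply Rmult_le_pos; lra). lra.
   intros a Ha. unfold v. field. lra.
Qed.

Lemma comparison n m A B q r T M G b d xh pk (y v xt : R -> vec) : 0 < q -> 0 < r -> 0 < T ->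
  riccati_sol n m A B q r T M G -> beta_sol n m A B q r T M G xh pk b -> delta_sol n m B q r T M xh pk b d ->
  (forall t i, (i < n)%nat -> derivable_pt_lim (fun t => y t i) t (mvec n A (y t) i + mvec m B (v t) i)) ->
  (forall t a, continuity_pt (fun t => v t a) t) ->
  (forall t i, (i < n)%nat -> continuity_pt (fun t => xt t i) t) ->
  (forall t, 0 < t < T -> forall i, (i < n)%nat -> xt t i = xh t i) ->
  Vfun n (G 0) (b 0) (d 0) (y 0) <= Vfun n (G T) (b T) (d T) (y T)
    + RInt (fun t => q * dot n (y t) (y t) + r / 2 * dot m (v t) (v t)) 0 T + q * RInt (fun t => dot n (xt t) (xt t)) 0 T.
Proof. intros Hq Hr HT Hric Hb Hd Hy Hv Hxt Hxe.
 set (F1 := fun t => q * dot n (y t) (y t) + r / 2 * dot m (v t) (v t)).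
 set (F2 := fun t => dot n (xt t) (xt t)).
 assert (Hyc : forall t i, (i < n)%nat -> continuity_pt (fun t => y t i) t).
 { intros. apply derivable_continuous_pt. eexists. apply Hy; auto. }
 assert (HF1 : forall t, continuity_pt F1 t).
 { intros t. unfold F1. apply (continuity_pt_plus (fun t => q * dot n (y t) (y t)) (fun t => r / 2 * dot m (v t) (v t))).
   apply (continuity_pt_scal (fun t => dot n (y t) (y t))). apply cont_pt_dot; auto.
   apply (continuity_pt_scal (fun t => dot m (v t) (v t))). apply cont_pt_dot; auto. }
 assert (HF2 : forall t, continuity_pt F2 t). { intros t. apply cont_pt_dot; auto. }
 assert (Hmono := mono 0 T (fun t => Vfun n (G t) (b t) (d t) (y t) + RInt F1 0 t + q * RInt F2 0 t)
   (fun t => (r / 2 * dot m (fun a => v t a + / r * mvec n (trm B) (fun i => mvec n (G t) (y t) i + b t i) a)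
                  (fun a => v t a + / r * mvec n (trm B) (fun i => mvec n (G t) (y t) i + b t i) a)
    - r / 2 * dot m (v t) (v t) - q / 2 * dot n (fun i => y t i - xh t i) (fun i => y t i - xh t i)) + F1 t + q * F2 t)).
 cbv beta in Hmono. rewrite !RInt_point in Hmono. unfold zero in Hmono; simpl in Hmono.
 enough (Vfun n (G 0) (b 0) (d 0) (y 0) + 0 + q * 0 <= Vfun n (G T) (b T) (d T) (y T) + RInt F1 0 T + q * RInt F2 0 T) by lra.
 apply Hmono; auto.
 - apply (cont_on_plus 0 T (fun t => Vfun n (G t) (b t) (d t) (y t) + RInt F1 0 t) (fun t => q * RInt F2 0 t)); try lra.
   apply (cont_on_plus 0 T (fun t => Vfun n (G t) (b t) (d t) (y t)) (fun t => RInt F1 0 t)); try lra.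
   apply cont_on_Vfun; try lra. intros; apply (Hric i j); auto. intros; apply (Hb i); auto. apply Hd.
   intros; apply cont_on_of_cont; auto.
   apply cont_on_of_cont. intros. apply derivable_continuous_pt. eexists. apply prim_deriv; auto.
   apply cont_on_of_cont. intros. apply derivable_continuous_pt. eexists. apply derivable_pt_lim_scal. apply prim_deriv; auto.
 - intros t Ht.
   apply (derivable_pt_lim_plus (fun t => Vfun n (G t) (b t) (d t) (y t) + RInt F1 0 t) (fun t => q * RInt F2 0 t)).
   apply (derivable_pt_lim_plus (fun t => Vfun n (G t) (b t) (d t) (y t)) (fun t => RInt F1 0 t)).
   eapply D_eq. apply (D_Vfun n G b y d (ricf n m A B q r (G t))).
   + intros i c Hi Hc. apply (Hric i c Hi Hc); auto.
   + intros i Hi. apply (Hb i Hi); auto.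
   + apply Hd; auto.
   + intros i Hi. apply Hy; auto.
   + apply (sq_identity n m A B q r); try lra; auto.
     * intros; apply (gamma_sym n m A B q r T M G); auto; lra.
   + apply prim_deriv; auto.
   + apply (derivable_pt_lim_scal (fun t => RInt F2 0 t)). apply prim_deriv; auto.
 - intros t Ht.
   assert (E : F2 t = dot n (xh t) (xh t)). { unfold F2. apply dot_ext; intros; apply Hxe; auto. }
   rewrite E. unfold F1.
   assert (H1 := dot_diff_le n (y t) (xh t)).
   assert (0 <= dot m (fun a => v t a + / r * mvec n (trm B) (fun i => mvec n (G t) (y t) i + b t i) a)
                  (fun a => v t a + / r * mvec n (trm B) (fun i => mvec n (G t) (y t) i + b t i) a)) by apply dot_sq_nonneg.
   nra.
Qed.

Lemma argmin l (f : nat -> R) : (0 < l)%nat -> exists j, (j < l)%nat /\ forall k, (k < l)%nat -> f j <= f k.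
Proof. induction l; intros Hl; [lia|]. destruct (Nat.eq_dec l 0).
 - subst. exists O. split; auto. intros k Hk. replace k with O by lia. lra.
 - destruct IHl as [j [Hj H]]. lia.
   destruct (Rlt_dec (f l) (f j)).
   + exists l. split; [lia|]. intros k Hk. destruct (Nat.eq_dec k l). subst; lra. assert (f j <= f k) by (apply H; lia). lra.
   + exists j. split; [lia|]. intros k Hk. destruct (Nat.eq_dec k l). subst; lra. apply H; lia. Qed.

Lemma least_ex (P : nat -> Prop) : forall j, P j -> exists j0, P j0 /\ forall j', (j' < j0)%nat -> ~ P j'.
Proof. intros j. induction j as [j IH] using lt_wf_ind. intros Hj.
 destruct (classic (exists j', (j' < j)%nat /\ P j')) as [[j' [Hj' HP]]|Hn].
 - apply (IH j' Hj' HP).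
 - exists j. split; auto. intros j' Hj' HP. apply Hn; eauto. Qed.

Lemma basin_exists n l (b0 : nat -> vec) (d0 : nat -> R) x : (0 < l)%nat -> exists j, basin n l b0 d0 j x.
Proof. intros Hl. set (f := fun k => dot n (b0 k) x + d0 k).
 assert (Hin : forall j, in_D n l b0 d0 j x <-> forall k, (k < l)%nat -> f j <= f k).
 { intros j. unfold in_D, f. split; intros H k Hk; specialize (H k Hk); rewrite ?dot_minus_l in *; try lra.
 }
 destruct (argmin l f Hl) as [j1 Hj1].
 destruct (least_ex (fun j => (j < l)%nat /\ forall k, (k < l)%nat -> f j <= f k) j1 Hj1) as [j0 [[Hj0 Hm] Hleast]].
 exists j0. split; auto. split. apply Hin; auto.
 intros j' Hj' HD. apply (Hleast j' Hj'). split. lia. apply Hin; auto. Qed.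

Theorem lemma2 (n m : nat) (A B : mat) (q r T : R) (l : nat) (p : nat -> vec)
  (N : nat) (x0 : nat -> vec)
  (xhat : R -> R -> vec) (G : R -> R -> mat)
  (beta : R -> nat -> R -> vec) (delta : R -> nat -> R -> R)
  (x : R -> nat -> R -> vec) :
  0 < q -> 0 < r -> 0 < T -> (0 < l)%nat ->
  controllable n m A B ->
  (forall M, 0 < M -> forall i, (i < n)%nat -> cont_on 0 T (fun t => xhat M t i)) ->
  (exists C, forall M, 0 < M ->
     forall pr : Riemann_integrable (fun t => dot n (xhat M t) (xhat M t)) 0 T,
       sqrt (RiemannInt pr) <= C) ->
  (forall M, 0 < M -> riccati_sol n m A B q r T M (G M)) ->
  (forall M, 0 < M -> forall k, (k < l)%nat ->
     beta_sol n m A B q r T M (G M) (xhat M) (p k) (beta M k)) ->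
  (forall M, 0 < M -> forall k, (k < l)%nat ->
     delta_sol n m B q r T M (xhat M) (p k) (beta M k) (delta M k)) ->
  (forall M, 0 < M -> forall i, (i < N)%nat -> forall j,
     basin n l (fun k => beta M k 0) (fun k => delta M k 0) j (x0 i) ->
     agent_traj n m A B r T (G M) (beta M j) (x0 i) (x M i)) ->
  forall eps, 0 < eps ->
    exists M0, 0 < M0 /\
      forall M, M0 < M -> forall i, (i < N)%nat ->
        exists j, (j < l)%nat /\ vnorm n (fun c => x M i T c - p j c) < eps.
Proof.
 intros Hq Hr HT Hl Hc Hxc [C HC] HG Hbeta Hdelta Hag eps Heps.
 destruct (Nat.eq_dec n 0) as [Hn0|Hn0].
 { subst n. exists 1. split; [lra|]. intros M HM i Hi. exists O. split; auto.
   unfold vnorm, dot. simpl. rewrite sqrt_0. auto. }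
 assert (Hn : (0 < n)%nat) by lia.
 set (xt := fun M t => fun i => xhat M (clamp 0 T t) i).
 assert (Hxtc : forall M, 0 < M -> forall t i, (i < n)%nat -> continuity_pt (fun t => xt M t i) t).
 { intros M HM t i Hi. unfold xt. apply (cont_clamp 0 T (fun u => xhat M u i)); [lra|]. auto. }
 assert (HL2 : forall M, 0 < M -> 0 <= C /\ RInt (fun t => dot n (xt M t) (xt M t)) 0 T <= C * C).
 { intros M HM.
   assert (Hex : ex_RInt (fun t => dot n (xt M t) (xt M t)) 0 T).
   { apply (ex_RInt_continuous (V := R_CompleteNormedModule)). intros. apply continuity_pt_filterlim.
     apply cont_pt_dot; intros; apply Hxtc; auto. }
   assert (Hext : forall t, Rmin 0 T < t < Rmax 0 T -> dot n (xt M t) (xt M t) = dot n (xhat M t) (xhat M t)).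
   { intros t Ht. rewrite Rmin_left, Rmax_right in Ht by lra. apply dot_ext; intros; unfold xt; rewrite clamp_id; auto; lra. }
   assert (Hex2 := ex_RInt_ext _ _ 0 T Hext Hex).
   set (pr := ex_RInt_Reals_0 _ _ _ Hex2).
   assert (H1 := HC M HM pr).
   rewrite <- RInt_Reals in H1. rewrite <- (RInt_ext _ _ 0 T Hext) in H1.
   assert (H0 : 0 <= RInt (fun t => dot n (xt M t) (xt M t)) 0 T).
   { apply RInt_ge_0; auto; try lra. intros; apply dot_sq_nonneg. }
   assert (Hs := sqrt_pos (RInt (fun t => dot n (xt M t) (xt M t)) 0 T)).
   split. lra.
   rewrite <- (sqrt_sqrt _ H0). apply Rmult_le_compat; lra. }
 assert (HC0 : 0 <= C) by (apply (HL2 1); lra).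
 assert (Hst : forall i, exists yv : (R -> vec) * (R -> vec),
   (forall c, (c < n)%nat -> fst yv 0 c = x0 i c) /\ (forall c, (c < n)%nat -> fst yv T c = p O c) /\
   (forall t c, (c < n)%nat -> derivable_pt_lim (fun t => fst yv t c) t (mvec n A (fst yv t) c + mvec m B (snd yv t) c)) /\
   (forall t a, continuity_pt (fun t => snd yv t a) t)).
 { intros i. destruct (steer n m A B T Hc Hn ltac:(lra) (x0 i) (p O)) as [y [v Hyv]]. exists (y, v). simpl. auto. }
 set (yy := fun i => fst (proj1_sig (constructive_indefinite_description _ (Hst i)))).
 set (vv := fun i => snd (proj1_sig (constructive_indefinite_description _ (Hst i)))).
 assert (Hyv : forall i, (forall c, (c < n)%nat -> yy i 0 c = x0 i c) /\ (forall c, (c < n)%nat -> yy i T c = p O c) /\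
   (forall t c, (c < n)%nat -> derivable_pt_lim (fun t => yy i t c) t (mvec n A (yy i t) c + mvec m B (vv i t) c)) /\
   (forall t a, continuity_pt (fun t => vv i t a) t)).
 { intros i. unfold yy, vv. destruct (constructive_indefinite_description _ (Hst i)) as [yv H]. simpl. auto. }
 set (K := fun i => RInt (fun t => q * dot n (yy i t) (yy i t) + r / 2 * dot m (vv i t) (vv i t)) 0 T).
 set (Kmax := sumR N (fun i => Rabs (K i))).
 assert (HK : forall i, (i < N)%nat -> K i <= Kmax).
 { intros i Hi. eapply Rle_trans. apply Rle_abs. apply (sumR_ge_term N (fun i => Rabs (K i))); auto. intros; apply Rabs_pos. }
 assert (HKm0 : 0 <= Kmax) by (apply sumR_nonneg; intros; apply Rabs_pos).
 set (W := Kmax + q * (C * C)).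
 assert (HW0 : 0 <= W). { unfold W. assert (0 <= q * (C * C)) by (apply Rmult_le_pos; nra). lra. }
 assert (Hbound : forall M, 0 < M -> forall i, (i < N)%nat -> exists j, (j < l)%nat /\
    M / 2 * dot n (fun c => x M i T c - p j c) (fun c => x M i T c - p j c) <= W).
 { intros M HM i Hi.
   destruct (basin_exists n l (fun k => beta M k 0) (fun k => delta M k 0) (x0 i) Hl) as [j Hj].
   assert (Hjl : (j < l)%nat) by apply Hj.
   exists j. split; auto.
   assert (Hx := Hag M HM i Hi j Hj).
   assert (CL := closed_loop n m A B q r T M (G M) (beta M j) (delta M j) (xhat M) (p j) (x0 i) (x M i) Hq Hr HT
                  (HG M HM) (Hbeta M HM j Hjl) (Hdelta M HM j Hjl) Hx).
   rewrite (V_at_T n M (G M T) (beta M j T) (delta M j T) (p j)) in CL.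
   2:{ intros; apply (HG M HM); auto. }
   2:{ intros; apply (Hbeta M HM j Hjl); auto. }
   2:{ apply (Hdelta M HM j Hjl). }
   rewrite (Vfun_ext n _ _ _ (x M i 0) (x0 i)) in CL by (intros; apply (Hx i0); auto).
   assert (HB : Vfun n (G M 0) (beta M j 0) (delta M j 0) (x0 i) <= Vfun n (G M 0) (beta M O 0) (delta M O 0) (x0 i)).
   { destruct Hj as [_ [HD _]]. specialize (HD O Hl). rewrite dot_minus_l in HD. unfold Vfun. lra. }
   destruct (Hyv i) as [Hy0 [HyT [Hyd Hvc]]].
   assert (CMP := comparison n m A B q r T M (G M) (beta M O) (delta M O) (xhat M) (p O) (yy i) (vv i) (xt M) Hq Hr HT
                  (HG M HM) (Hbeta M HM O Hl) (Hdelta M HM O Hl) Hyd Hvc (Hxtc M HM)).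
   assert (CMP' : Vfun n (G M 0) (beta M O 0) (delta M O 0) (yy i 0) <=
      Vfun n (G M T) (beta M O T) (delta M O T) (yy i T) + K i + q * RInt (fun t => dot n (xt M t) (xt M t)) 0 T).
   { apply CMP. intros t Ht c Hc'. unfold xt. rewrite clamp_id; auto; lra. }
   rewrite (Vfun_ext n _ _ _ (yy i 0) (x0 i)) in CMP' by auto.
   rewrite (V_at_T n M (G M T) (beta M O T) (delta M O T) (p O)) in CMP'.
   2:{ intros; apply (HG M HM); auto. }
   2:{ intros; apply (Hbeta M HM O Hl); auto. }
   2:{ apply (Hdelta M HM O Hl). }
   rewrite dot_zero in CMP' by (intros c Hc'; rewrite HyT; auto; ring).
   destruct (HL2 M HM) as [_ HL].
   assert (q * RInt (fun t => dot n (xt M t) (xt M t)) 0 T <= q * (C * C)) by (apply Rmult_le_compat_l; lra).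
   assert (K i <= Kmax) by (apply HK; auto).
   unfold W. lra. }
 exists (2 * W / (eps * eps) + 1). split.
 { assert (0 <= 2 * W / (eps * eps)). { apply Rmult_le_pos. lra. left; apply Rinv_0_lt_compat; nra. } lra. }
 intros M HM i Hi.
 assert (HM0 : 0 < M). { assert (0 <= 2 * W / (eps * eps)). { apply Rmult_le_pos. lra. left; apply Rinv_0_lt_compat; nra. } lra. }
 destruct (Hbound M HM0 i Hi) as [j [Hj Hb]]. exists j. split; auto.
 set (s := dot n (fun c => x M i T c - p j c) (fun c => x M i T c - p j c)) in *.
 assert (Hs0 : 0 <= s) by apply dot_sq_nonneg.
 assert (Hlt : s < eps * eps).
 { assert (H1 : 2 * W / (eps * eps) < M) by lra.
   assert (H2 : 2 * W < M * (eps * eps)).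
   { apply (Rmult_lt_compat_r (eps * eps)) in H1; [|nra]. unfold Rdiv in H1. rewrite Rmult_assoc, Rinv_l in H1 by nra. lra. }
   nra. }
 unfold vnorm. fold s. rewrite <- (sqrt_square eps) by lra. apply sqrt_lt_1; lra.
Qed.
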